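(* Let $\Sigma$ be a connected orientable compact surface with $n$ boundary components $\{1,\dots,n\}$, $T$ an ideal triangulation with edges $E$ and faces $F$, and $l^0\in\mathbb{R}_{>0}^{|E|}$ a hyperbolic metric on $(\Sigma,T)$. The combinatorial Yamabe flow $$\frac{dw_i(t)}{dt}=B_i(t),\qquad w_i(0)=0,\qquad i=1,\dots,n,$$ has a solution for $t\in[0,\infty)$. Along this flow, the initial hyperbolic surface with geodesic boundary converges to a complete hyperbolic surface with cusps (i.e. the boundary lengths $B_i(t)$ tend to $0$ and each face's right-angled hexagon converges to a hyperbolic ideal triangle as $t\to\infty$).
   Context: An ideal triangulation: glue finitely many hexagons, each with three pairwise non-adjacent sides colored red, along red sides in pairs; faces are the images of hexagons, edges the images of red sides. Each edge joins boundary components $i,j$ and is denoted $ij$; each face meets boundary components $i,j,k$ and is denoted $ijk$. A hyperbolic metric is a vector $l\in\mathbb{R}_{>0}^{|E|}$; each face $ijk$ is realized as the unique hyperbolic right-angled hexagon with pairwise non-adjacent sides of lengths $l_{jk},l_{ki},l_{ij}$, and $\theta^i_{jk}$ is the length of the side on boundary component $i$ (opposite to $jk$). For $w\in\mathbb{R}^n$, the metric $l$ is defined by $\cosh\frac{l_{ij}}{2}=e^{w_i+w_j}\cosh\frac{l^0_{ij}}{2}$ (required positive), and $B_i=\sum_{ijk\in F}\theta^i_{jk}$ is the length of boundary component $i$. *)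

(* Defs.v *)
From Stdlib Require Import Reals List Arith.
From Coquelicot Require Import Coquelicot.
Import ListNotations.
Open Scope R_scope.

Definition arccosh (y : R) : R := ln (y + sqrt (y * y - 1)).

(* Combinatorial data of an ideal triangulation (paper's notation):
   - boundary components are 0..n-1, edges 0..nE-1, faces 0..nF-1;
   - [corner f k] (k in {0,1,2}) is the boundary component containing the
     k-th boundary arc of hexagon f (so face f is "ijk" with
     i,j,k = corner f 0, corner f 1, corner f 2);
   - [side f k] is the edge that is the image of the red side of hexagon f
     opposite to the k-th boundary arc (it joins corner f (k+1) and
     corner f (k+2), indices mod 3);
   - [ends e] is the (unordered) pair of boundary components joined by e. *)
Definition corners_list (nF : nat) : list (nat * nat) :=
  list_prod (seq 0 nF) (seq 0 3).

Definition nxt (k : nat) : nat := (k + 1) mod 3.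
Definition nxt2 (k : nat) : nat := (k + 2) mod 3.

Definition same_unordered (p : nat * nat) (x y : nat) : Prop :=
  (fst p = x /\ snd p = y) \/ (fst p = y /\ snd p = x).

Definition ideal_triangulation (n nE nF : nat)
    (corner side : nat -> nat -> nat) (ends : nat -> nat * nat) : Prop :=
  (forall f k, (f < nF)%nat -> (k < 3)%nat -> (corner f k < n)%nat /\ (side f k < nE)%nat) /\
  (* red sides are glued in pairs: each edge is the image of exactly two red sides *)
  (forall e, (e < nE)%nat ->
     length (filter (fun p => Nat.eqb (side (fst p) (snd p)) e) (corners_list nF)) = 2%nat) /\
  (* each edge joins the boundary components met by the two ends of its red sides *)
  (forall f k, (f < nF)%nat -> (k < 3)%nat ->
     same_unordered (ends (side f k)) (corner f (nxt k)) (corner f (nxt2 k))) /\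
  (forall i, (i < n)%nat -> exists f k, (f < nF)%nat /\ (k < 3)%nat /\ corner f k = i).

(* The metric l = l(w):  cosh (l_ij / 2) = e^{w_i + w_j} cosh (l0_ij / 2). *)
Definition cosh_half_len (l0 : nat -> R) (ends : nat -> nat * nat)
    (w : nat -> R) (e : nat) : R :=
  exp (w (fst (ends e)) + w (snd (ends e))) * cosh (l0 e / 2).

(* well-definedness: l_e > 0, i.e. cosh(l_e/2) > 1, for every edge *)
Definition metric_ok (nE : nat) (l0 : nat -> R) (ends : nat -> nat * nat)
    (w : nat -> R) : Prop :=
  forall e, (e < nE)%nat -> 1 < cosh_half_len l0 ends w e.

Definition len (l0 : nat -> R) (ends : nat -> nat * nat) (w : nat -> R) (e : nat) : R :=
  2 * arccosh (cosh_half_len l0 ends w e).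

(* Side length of the right-angled hexagon f on boundary component corner f k,
   opposite to the red side side f k (cosine rule for right-angled hexagons):
   cosh θ^i_{jk} = (cosh l_jk + cosh l_ij cosh l_ik) / (sinh l_ij sinh l_ik). *)
Definition theta (l0 : nat -> R) (ends : nat -> nat * nat) (side : nat -> nat -> nat)
    (w : nat -> R) (f k : nat) : R :=
  let a := len l0 ends w (side f k) in
  let b := len l0 ends w (side f (nxt k)) in
  let c := len l0 ends w (side f (nxt2 k)) in
  arccosh ((cosh a + cosh b * cosh c) / (sinh b * sinh c)).

(* Length of boundary component i: B_i = sum over faces ijk of θ^i_{jk}
   (a face meeting i at several corners contributes each corner). *)
Definition Blen (nF : nat) (l0 : nat -> R) (ends : nat -> nat * nat)
    (corner side : nat -> nat -> nat) (w : nat -> R) (i : nat) : R :=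
  fold_right Rplus 0
    (map (fun p => if Nat.eqb (corner (fst p) (snd p)) i
                   then theta l0 ends side w (fst p) (snd p) else 0)
         (corners_list nF)).

(* Main.v *)
Require Import Defs.
From Stdlib Require Import Reals Lra Lia List Arith Classical.
From Coquelicot Require Import Coquelicot.
Import ListNotations.
Open Scope R_scope.


Lemma ballR (x e y : R) : ball x e y <-> Rabs (y - x) < e.
Proof. split; intro H; exact H. Qed.

Lemma cont_eps (f : R -> R) z :
  continuous f z -> forall eps, 0 < eps -> exists d, 0 < d /\
    forall s, Rabs (s - z) < d -> Rabs (f s - f z) < eps.
Proof.
  intros Hc eps He.
  destruct (proj1 (filterlim_locally f (f z)) Hc (mkposreal eps He)) as [d Hd].
  exists d. split. apply cond_pos. intros s Hs. apply Hd. apply ballR. exact Hs.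
Qed.

Lemma eps_cont (f : R -> R) z :
  (forall eps, 0 < eps -> exists d, 0 < d /\
    forall s, Rabs (s - z) < d -> Rabs (f s - f z) < eps) -> continuous f z.
Proof.
  intros H. apply filterlim_locally. intros [e He].
  destruct (H e He) as [d [Hd Hs]]. exists (mkposreal d Hd).
  intros s Hb. apply ballR. apply Hs. apply ballR in Hb. exact Hb.
Qed.

Lemma cont_coords (n : nat) (f : nat -> R -> R) z :
  (forall j, (j < n)%nat -> continuous (f j) z) ->
  forall eps, 0 < eps -> exists d, 0 < d /\
    forall s, Rabs (s - z) < d -> forall j, (j < n)%nat -> Rabs (f j s - f j z) < eps.
Proof.
  induction n as [|n IH]; intros Hc eps He.
  - exists 1. split. lra. intros. lia.
  - destruct (IH (fun j Hj => Hc j ltac:(lia)) eps He) as [d1 [Hd1 H1]].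
    destruct (cont_eps (f n) z (Hc n (Nat.lt_succ_diag_r n)) eps He) as [d2 [Hd2 H2]].
    exists (Rmin d1 d2). split. apply Rmin_pos; auto.
    intros s Hs j Hj.
    assert (Hm1 := Rmin_l d1 d2). assert (Hm2 := Rmin_r d1 d2).
    destruct (Nat.eq_dec j n) as [->|Hne].
    + apply H2. lra.
    + apply H1. lra. lia.
Qed.

Lemma Rmax0_lip s z : Rabs (Rmax 0 s - Rmax 0 z) <= Rabs (s - z).
Proof.
  unfold Rmax. destruct (Rle_dec 0 s); destruct (Rle_dec 0 z);
  unfold Rabs; repeat destruct Rcase_abs; lra.
Qed.

Lemma cont_Rmax0 (f : R -> R) z :
  (forall t, continuous f t) -> continuous (fun s => f (Rmax 0 s)) z.
Proof.
  intros Hf. apply eps_cont. intros eps He.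
  destruct (cont_eps f (Rmax 0 z) (Hf _) eps He) as [d [Hd H]].
  exists d. split. exact Hd. intros s Hs. apply H.
  eapply Rle_lt_trans. apply Rmax0_lip. exact Hs.
Qed.

Definition box (n : nat) (M : R) (x : nat -> R) :=
  forall j, (j < n)%nat -> 0 <= x j <= M.
Definition close (n : nat) (d : R) (x y : nat -> R) :=
  forall j, (j < n)%nat -> Rabs (x j - y j) <= d.

Definition LipG (n : nat) (G : (nat -> R) -> nat -> R) :=
  forall M, 0 <= M -> exists L, 0 <= L /\ forall x y d i,
    box n M x -> box n M y -> 0 <= d -> close n d x y -> (i < n)%nat ->
    Rabs (G x i - G y i) <= L * d.

Lemma G_cont n G (HL : LipG n G) (p : R -> nat -> R) z M i :
  0 <= M -> (i < n)%nat ->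
  (forall j, (j < n)%nat -> continuous (fun s => p s j) z) ->
  (exists r, 0 < r /\ forall s, Rabs (s - z) < r -> box n M (p s)) ->
  continuous (fun s => G (p s) i) z.
Proof.
  intros HM Hi Hc [r [Hr Hb]].
  destruct (HL M HM) as [L [HL0 HL1]].
  apply eps_cont. intros eps He.
  destruct (cont_coords n (fun j s => p s j) z Hc (eps / (L + 1))) as [d [Hd Hs]].
  apply Rdiv_lt_0_compat; lra.
  exists (Rmin d r). split. apply Rmin_pos; auto.
  intros s Hsz.
  assert (Hm1 := Rmin_l d r). assert (Hm2 := Rmin_r d r).
  eapply Rle_lt_trans. apply (HL1 _ _ (eps / (L+1))).
  apply Hb; lra. apply Hb. rewrite Rminus_diag, Rabs_R0. exact Hr.
  apply Rlt_le, Rdiv_lt_0_compat; lra.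
  intros j Hj. apply Rlt_le. apply (Hs s). lra. exact Hj. exact Hi.
  assert (Hq : 0 < eps / (L+1)) by (apply Rdiv_lt_0_compat; lra).
  apply Rlt_le_trans with ((L+1) * (eps / (L+1))).
  apply Rmult_lt_compat_r. exact Hq. lra.
  right. field. lra.
Qed.

Lemma ex_RInt_cont_R (f : R -> R) a b :
  (forall z, Rmin a b <= z <= Rmax a b -> continuous f z) -> ex_RInt f a b.
Proof. exact (@ex_RInt_continuous R_CompleteNormedModule f a b). Qed.

Lemma RInt_correct_R (f : R -> R) a b : ex_RInt f a b -> is_RInt f a b (RInt f a b).
Proof. exact (@RInt_correct R_CompleteNormedModule f a b). Qed.

Lemma cont_of_derive (f : R -> R) x l : is_derive f x l -> continuous f x.
Proof. intros H. apply (@ex_derive_continuous R_AbsRing R_NormedModule). exists l. exact H. Qed.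


Lemma exp_le x y : x <= y -> exp x <= exp y.
Proof. intros [H|H]. left; apply exp_increasing; auto. right; subst; auto. Qed.

Fixpoint phi (n : nat) (G : (nat -> R) -> nat -> R) (k : nat) : R -> nat -> R :=
  match k with
  | O => fun _ _ => 0
  | S k' => fun t i => if Nat.ltb i n then
      RInt (fun s => G (phi n G k' (Rmax 0 s)) i) 0 t else 0
  end.

Definition Pb (A C t : R) := A / C * (exp (C * t) - 1).

Definition GrowthG n (G : (nat -> R) -> nat -> R) A C :=
  forall M x i, 0 <= M -> box n M x -> (i < n)%nat -> 0 <= G x i <= A + C * M.

Lemma phi_S n G k t i : (i < n)%nat ->
  phi n G (S k) t i = RInt (fun s => G (phi n G k (Rmax 0 s)) i) 0 t.
Proof. intros H. simpl. rewrite (proj2 (Nat.ltb_lt i n) H). reflexivity. Qed.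

Lemma phi_0 n G k i : phi n G k 0 i = 0.
Proof. destruct k; simpl. reflexivity. destruct (Nat.ltb i n). exact (RInt_point 0 _). reflexivity. Qed.

Lemma Pb_nonneg A C t : 0 <= A -> 0 < C -> 0 <= t -> 0 <= Pb A C t.
Proof.
  intros HA HC Ht. unfold Pb. apply Rmult_le_pos.
  apply Rmult_le_pos. exact HA. apply Rlt_le, Rinv_0_lt_compat, HC.
  assert (1 <= exp (C * t)). rewrite <- exp_0. apply exp_le. nra. lra.
Qed.

Lemma Pb_mono A C s t : 0 <= A -> 0 < C -> s <= t -> Pb A C s <= Pb A C t.
Proof.
  intros HA HC Hst. unfold Pb. apply Rmult_le_compat_l.
  apply Rmult_le_pos. exact HA. apply Rlt_le, Rinv_0_lt_compat, HC.
  assert (exp (C * s) <= exp (C * t)). apply exp_le. nra. lra.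
Qed.

Lemma box_mono n M M' x : M <= M' -> box n M x -> box n M' x.
Proof. intros H Hb j Hj. specialize (Hb j Hj). lra. Qed.

Lemma Pb_RInt A C t : 0 < C ->
  is_RInt (fun s => A + C * Pb A C s) 0 t (Pb A C t).
Proof.
  intros HC.
  apply is_RInt_ext with (fun s => A * exp (C * s)).
  { intros x _. unfold Pb. change (A * exp (C * x) = A + C * (A / C * (exp (C * x) - 1))). field. lra. }
  replace (Pb A C t) with (minus ((fun s => A / C * exp (C * s)) t) ((fun s => A / C * exp (C * s)) 0)).
  { apply (@is_RInt_derive R_CompleteNormedModule (fun s => A / C * exp (C * s)) (fun s => A * exp (C * s)) 0 t).
    - intros x _. auto_derive. auto. field. lra.
    - intros x _. apply continuity_pt_filterlim.
      apply derivable_continuous_pt. reg. }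
  unfold minus, plus, opp; simpl. unfold Pb. rewrite Rmult_0_r, exp_0. ring.
Qed.

Definition Inv n G A C k :=
  (forall j, (j < n)%nat -> forall t, continuous (fun s => phi n G k s j) t) /\
  (forall t, 0 <= t -> box n (Pb A C t) (phi n G k t)).

Lemma integrand_cont n G A C k i z :
  0 <= A -> 0 < C -> LipG n G -> Inv n G A C k -> (i < n)%nat ->
  continuous (fun s => G (phi n G k (Rmax 0 s)) i) z.
Proof.
  intros HA HC HL [Hc Hb] Hi.
  apply (G_cont n G HL (fun s => phi n G k (Rmax 0 s)) z (Pb A C (Rmax 0 z + 1)) i).
  apply Pb_nonneg; auto. assert (H := Rmax_l 0 z). lra. exact Hi.
  intros j Hj. apply (cont_Rmax0 (fun s => phi n G k s j)). apply Hc, Hj.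
  exists 1. split. lra. intros s Hs.
  apply box_mono with (Pb A C (Rmax 0 s)). apply Pb_mono; auto.
  assert (H := Rmax0_lip s z). assert (Rabs (Rmax 0 s - Rmax 0 z) < 1) by lra.
  apply Rabs_def2 in H0. lra.
  apply Hb. apply Rmax_l.
Qed.

Lemma phi_deriv n G A C k i t :
  0 <= A -> 0 < C -> LipG n G -> Inv n G A C k -> (i < n)%nat ->
  is_derive (fun s => phi n G (S k) s i) t (G (phi n G k (Rmax 0 t)) i).
Proof.
  intros HA HC HL HI Hi.
  apply is_derive_ext with (fun s => RInt (fun s => G (phi n G k (Rmax 0 s)) i) 0 s).
  intros s. rewrite phi_S; auto.
  apply (@is_derive_RInt R_NormedModule (fun s => G (phi n G k (Rmax 0 s)) i)
     (fun s => RInt (fun s => G (phi n G k (Rmax 0 s)) i) 0 s) 0 t).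
  apply filter_forall. intros b. apply (@RInt_correct R_CompleteNormedModule). apply ex_RInt_cont_R.
  intros z _. apply (integrand_cont n G A C); auto.
  apply (integrand_cont n G A C); auto.
Qed.

Lemma Inv_0 n G A C : 0 <= A -> 0 < C -> Inv n G A C 0.
Proof.
  intros HA HC. split. intros j Hj t. simpl. apply continuous_const.
  intros t Ht j Hj. simpl. split. lra. apply Pb_nonneg; auto.
Qed.

Lemma Inv_S n G A C k :
  0 <= A -> 0 < C -> LipG n G -> GrowthG n G A C -> Inv n G A C k -> Inv n G A C (S k).
Proof.
  intros HA HC HL HGr HI. split.
  - intros j Hj t. apply (@ex_derive_continuous R_AbsRing R_NormedModule). eexists. apply (phi_deriv n G A C); auto.
  - intros t Ht j Hj. rewrite phi_S; auto.
    assert (Hex : ex_RInt (fun s => G (phi n G k (Rmax 0 s)) j) 0 t).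
    { apply ex_RInt_cont_R. intros z _. apply (integrand_cont n G A C); auto. }
    split.
    + apply RInt_ge_0; auto. intros x Hx.
      rewrite Rmax_right by lra.
      apply (HGr (Pb A C x)). apply Pb_nonneg; lra. apply HI. lra. exact Hj.
    + rewrite <- (is_RInt_unique _ _ _ _ (Pb_RInt A C t HC)).
      apply RInt_le; auto. eexists. apply Pb_RInt. exact HC.
      intros x Hx. rewrite Rmax_right by lra.
      apply (HGr (Pb A C x)). apply Pb_nonneg; lra. apply HI. lra. exact Hj.
Qed.

Lemma Inv_all n G A C k :
  0 <= A -> 0 < C -> LipG n G -> GrowthG n G A C -> Inv n G A C k.
Proof.
  intros. induction k. apply Inv_0; auto. apply Inv_S; auto.
Qed.


Lemma RInt_abs_bound (h b : R -> R) a c B :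
  a <= c -> ex_RInt h a c -> is_RInt b a c B ->
  (forall x, a < x < c -> Rabs (h x) <= b x) -> Rabs (RInt h a c) <= B.
Proof.
  intros Hac Hh Hb Hx.
  assert (Eb : RInt b a c = B) by (apply (@is_RInt_unique R_CompleteNormedModule); exact Hb).
  assert (Hnb : is_RInt (fun x => - b x) a c (- B)).
  { apply (@is_RInt_opp R_NormedModule) in Hb. exact Hb. }
  assert (Enb : RInt (fun x => - b x) a c = - B)
    by (apply (@is_RInt_unique R_CompleteNormedModule); exact Hnb).
  apply Rabs_le. split.
  - rewrite <- Enb. apply RInt_le; auto. eexists; exact Hnb.
    intros x Hx'. specialize (Hx x Hx'). apply Rabs_le_between in Hx. lra.
  - rewrite <- Eb. apply RInt_le; auto. eexists; exact Hb.
    intros x Hx'. specialize (Hx x Hx'). apply Rabs_le_between in Hx. lra.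
Qed.

Lemma RInt_pow c m t : is_RInt (fun s => c * s ^ m) 0 t (c * t ^ (S m) / INR (S m)).
Proof.
  replace (c * t ^ (S m) / INR (S m)) with
    (minus ((fun s => c * s ^ (S m) / INR (S m)) t) ((fun s => c * s ^ (S m) / INR (S m)) 0)).
  { apply (@is_RInt_derive R_CompleteNormedModule (fun s => c * s ^ (S m) / INR (S m)) (fun s => c * s ^ m) 0 t).
    - intros x _. auto_derive. auto.
      change (match m with 0%nat => 1 | S _ => INR m + 1 end) with (INR (S m)). field. apply not_0_INR. lia.
    - intros x _. apply continuity_pt_filterlim.
      apply derivable_continuous_pt. reg. }
  unfold minus, plus, opp. change (Rplus (c * t ^ S m / INR (S m)) (- (c * 0 ^ S m / INR (S m))) = c * t ^ S m / INR (S m)). rewrite pow_i by lia. field. apply not_0_INR. lia.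
Qed.

Lemma RInt_minus_R (f g : R -> R) a b : ex_RInt f a b -> ex_RInt g a b ->
  RInt (fun x => f x - g x) a b = RInt f a b - RInt g a b.
Proof. exact (@RInt_minus R_CompleteNormedModule f g a b). Qed.

Lemma ex_RInt_minus_R (f g : R -> R) a b : ex_RInt f a b -> ex_RInt g a b ->
  ex_RInt (fun x => f x - g x) a b.
Proof. exact (@ex_RInt_minus R_NormedModule f g a b). Qed.

Definition ODEH n G A C := 0 <= A /\ 0 < C /\ LipG n G /\ GrowthG n G A C.

Lemma ex_integrand n G A C k i a b : ODEH n G A C -> (i < n)%nat ->
  ex_RInt (fun s => G (phi n G k (Rmax 0 s)) i) a b.
Proof.
  intros (HA & HC & HL & HGr) Hi. apply ex_RInt_cont_R. intros z _.
  apply (integrand_cont n G A C); auto. apply Inv_all; auto.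
Qed.

Lemma diff_bound n G A C T L : ODEH n G A C -> 0 <= T -> 0 <= L ->
  (forall x y d i, box n (Pb A C T) x -> box n (Pb A C T) y -> 0 <= d ->
     close n d x y -> (i < n)%nat -> Rabs (G x i - G y i) <= L * d) ->
  forall k t i, 0 <= t <= T -> (i < n)%nat ->
  Rabs (phi n G (S k) t i - phi n G k t i) <=
    (A + C * Pb A C T) * L ^ k * t ^ (S k) / INR (fact (S k)).
Proof.
  intros H0 HT HL0 HLip. pose proof H0 as (HA & HC & HL & HGr).
  assert (HPT : 0 <= Pb A C T) by (apply Pb_nonneg; auto).
  induction k as [|k IH]; intros t i Ht Hi.
  - rewrite phi_S by auto. simpl phi at 2. rewrite Rminus_0_r.
    replace ((A + C * Pb A C T) * L ^ 0 * t ^ 1 / INR (fact 1))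
      with ((A + C * Pb A C T) * t ^ 1 / INR 1) by (simpl; field).
    apply RInt_abs_bound with (b := fun s => (A + C * Pb A C T) * s ^ 0).
    lra. apply (ex_integrand n G A C); auto. apply RInt_pow.
    intros x Hx. rewrite Rmax_right by lra. simpl.
    assert (Hb : box n (Pb A C T) (fun _ => 0)). { intros j Hj. lra. }
    destruct (HGr (Pb A C T) (fun _ => 0) i HPT Hb Hi).
    rewrite Rabs_right by lra. lra.
  - rewrite !phi_S by auto. rewrite <- RInt_minus_R by (apply (ex_integrand n G A C); auto).
    set (c := (A + C * Pb A C T) * L ^ S k / INR (fact (S k))).
    replace ((A + C * Pb A C T) * L ^ S k * t ^ S (S k) / INR (fact (S (S k))))
      with (c * t ^ S (S k) / INR (S (S k))).
    2: { unfold c. rewrite (fact_simpl (S k)), mult_INR. field. split.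
         apply INR_fact_neq_0. apply not_0_INR. lia. }
    apply RInt_abs_bound with (b := fun s => c * s ^ S k).
    lra. apply ex_RInt_minus_R; apply (ex_integrand n G A C); auto. apply RInt_pow.
    intros x Hx. rewrite Rmax_right by lra.
    assert (Hinv := Inv_all n G A C).
    replace (c * x ^ S k) with (L * ((A + C * Pb A C T) * L ^ k * x ^ S k / INR (fact (S k)))).
    2: { unfold c. replace (L ^ S k) with (L * L ^ k) by reflexivity. field. apply INR_fact_neq_0. }
    apply HLip.
    + apply box_mono with (Pb A C x). apply Pb_mono; lra.
      apply (Hinv (S k) HA HC HL HGr). lra.
    + apply box_mono with (Pb A C x). apply Pb_mono; lra.
      apply (Hinv k HA HC HL HGr). lra.
    + apply Rmult_le_pos. apply Rmult_le_pos. apply Rmult_le_pos.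
      assert (0 <= C * Pb A C T) by (apply Rmult_le_pos; lra). lra.
      apply pow_le; auto. apply pow_le; lra.
      apply Rlt_le, Rinv_0_lt_compat, INR_fact_lt_0.
    + intros j Hj. apply IH. lra. exact Hj.
    + exact Hi.
Qed.


Definition wsol n G (t : R) (i : nat) : R := real (Lim_seq (fun k => phi n G k t i)).

Lemma fact_S_ge k : INR (fact k) <= INR (fact (S k)).
Proof.
  rewrite fact_simpl, mult_INR. assert (H := INR_fact_lt_0 k).
  assert (1 <= INR (S k)) by (apply (le_INR 1); lia). nra.
Qed.

Lemma sn_exp x q : 0 <= x -> sum_f_R0 (fun m => x ^ m / INR (fact m)) q <= exp x.
Proof. apply exp_ge_taylor. Qed.

Lemma sn_lim x : is_lim_seq (fun q => sum_f_R0 (fun m => x ^ m / INR (fact m)) q) (exp x).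
Proof.
  apply is_lim_seq_Reals. apply Un_cv_ext with (E1 x).
  intros N. unfold E1. apply sum_eq. intros i _. unfold Rdiv. ring.
  apply E1_cvg.
Qed.

Lemma picard_conv n G A C T : ODEH n G A C -> 0 <= T ->
  exists L, 0 <= L /\
  (forall x y d i, box n (Pb A C T) x -> box n (Pb A C T) y -> 0 <= d ->
     close n d x y -> (i < n)%nat -> Rabs (G x i - G y i) <= L * d) /\
  exists tau : nat -> R, is_lim_seq tau 0 /\ (forall q, 0 <= tau q) /\
  forall q t i, 0 <= t <= T -> (i < n)%nat ->
    is_lim_seq (fun k => phi n G k t i) (wsol n G t i) /\
    Rabs (wsol n G t i - phi n G (S q) t i) <= tau q.
Proof.
  intros H0 HT. pose proof H0 as (HA & HC & HL & HGr).
  assert (HPT : 0 <= Pb A C T) by (apply Pb_nonneg; auto).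
  destruct (HL _ HPT) as [L [HL0 HLip]].
  exists L. split. exact HL0. split. exact HLip.
  set (x := L * T).
  assert (Hx : 0 <= x) by (unfold x; nra).
  set (a := fun m => x ^ m / INR (fact m)).
  set (Sn := fun q => sum_f_R0 a q).
  set (D := (A + C * Pb A C T) * T).
  assert (HD : 0 <= D). { unfold D. assert (0 <= C * Pb A C T) by (apply Rmult_le_pos; lra). nra. }
  assert (Ha : forall m, 0 <= a m).
  { intros m. unfold a. apply Rmult_le_pos. apply pow_le; auto. apply Rlt_le, Rinv_0_lt_compat, INR_fact_lt_0. }
  assert (HB : forall k t i, 0 <= t <= T -> (i < n)%nat ->
     Rabs (phi n G (S k) t i - phi n G k t i) <= D * a k).
  { intros k t i Ht Hi. eapply Rle_trans. apply (diff_bound n G A C T L); auto.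
    unfold D, a, x. rewrite Rpow_mult_distr.
    assert (HK : 0 <= A + C * Pb A C T). { assert (0 <= C * Pb A C T) by (apply Rmult_le_pos; lra). lra. }
    assert (Htk : t ^ S k <= T ^ S k) by (apply pow_incr; lra).
    assert (Hf := fact_S_ge k). assert (Hf0 := INR_fact_lt_0 k).
    simpl pow. unfold Rdiv.
    assert (Hi1 : / INR (fact (S k)) <= / INR (fact k)) by (apply Rinv_le_contravar; lra).
    assert (HLk := pow_le L k HL0). assert (HTk := pow_le T k HT).
    assert (HtS : t * t ^ k <= T * T ^ k) by exact Htk.
    assert (0 <= t * t ^ k) by (apply Rmult_le_pos; [lra| apply pow_le; lra]).
    assert (0 < / INR (fact (S k))) by (apply Rinv_0_lt_compat, INR_fact_lt_0).
    apply Rle_trans with ((A + C * Pb A C T) * L ^ k * (T * T ^ k) * / INR (fact (S k))).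
    apply Rmult_le_compat_r. lra. apply Rmult_le_compat_l. nra. exact HtS.
    replace ((A + C * Pb A C T) * T * (L ^ k * T ^ k * / INR (fact k)))
      with (((A + C * Pb A C T) * L ^ k * (T * T ^ k)) * / INR (fact k)) by ring.
    apply Rmult_le_compat_l. apply Rmult_le_pos. nra. nra. exact Hi1. }
  assert (Htail : forall q d t i, 0 <= t <= T -> (i < n)%nat ->
     Rabs (phi n G (S q + d) t i - phi n G (S q) t i) <= D * (Sn (q + d)%nat - Sn q)).
  { intros q d t i Ht Hi. induction d as [|d IH].
    - rewrite !Nat.add_0_r, Rminus_diag, Rabs_R0. lra.
    - replace (S q + S d)%nat with (S (S q + d)) by lia.
      replace (q + S d)%nat with (S (q + d)) by lia.
      unfold Sn at 1. simpl sum_f_R0. fold (Sn (q + d)%nat).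
      eapply Rle_trans. 
      replace (phi n G (S (S q + d)) t i - phi n G (S q) t i) with
        ((phi n G (S (S q + d)) t i - phi n G (S q + d) t i) + (phi n G (S q + d) t i - phi n G (S q) t i)) by ring.
      apply Rabs_triang.
      replace (S (q + d)) with (S q + d)%nat by lia.
      specialize (HB (S q + d)%nat t i Ht Hi). lra. }
  assert (Hsn : forall q, Sn q <= exp x) by (intros; apply sn_exp; auto).
  set (tau := fun q => D * (exp x - Sn q)).
  assert (Htau0 : forall q, 0 <= tau q) by (intros q; unfold tau; specialize (Hsn q); nra).
  assert (Htaul : is_lim_seq tau 0).
  { replace (Finite 0) with (Rbar_mult D (exp x - exp x)).
    apply is_lim_seq_scal_l. apply is_lim_seq_minus'. apply is_lim_seq_const. apply sn_lim.
    simpl. f_equal. ring. }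
  assert (Hbd : forall q p t i, (S q <= p)%nat -> 0 <= t <= T -> (i < n)%nat ->
     Rabs (phi n G p t i - phi n G (S q) t i) <= tau q).
  { intros q p t i Hp Ht Hi. replace p with (S q + (p - S q))%nat by lia.
    eapply Rle_trans. apply Htail; auto. unfold tau.
    apply Rmult_le_compat_l. auto. specialize (Hsn (q + (p - S q))%nat). lra. }
  exists tau. split. exact Htaul. split. exact Htau0.
  intros q t i Ht Hi.
  assert (Hex : ex_finite_lim_seq (fun k => phi n G k t i)).
  { apply ex_lim_seq_cauchy_corr. intros eps.
    apply is_lim_seq_Reals in Htaul.
    destruct (Htaul (eps / 2)) as [N HN]. apply Rdiv_lt_0_compat. apply cond_pos. lra.
    exists (S N). intros p m Hp Hm.
    specialize (HN N (le_n N)). unfold R_dist in HN. rewrite Rminus_0_r, Rabs_right in HN by (apply Rle_ge; auto).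
    replace (phi n G p t i - phi n G m t i) with
       ((phi n G p t i - phi n G (S N) t i) - (phi n G m t i - phi n G (S N) t i)) by ring.
    eapply Rle_lt_trans. apply Rabs_triang. rewrite Rabs_Ropp.
    assert (H1 := Hbd N p t i Hp Ht Hi). assert (H2 := Hbd N m t i Hm Ht Hi).
    destruct eps as [e He]; simpl in *. lra. }
  destruct Hex as [l Hl].
  assert (Hw : wsol n G t i = l). { unfold wsol. rewrite (is_lim_seq_unique _ _ Hl). reflexivity. }
  rewrite Hw. split. exact Hl.
  apply (is_lim_seq_incr_n _ (S q)) in Hl.
  apply Rabs_le. split.
  - assert (Hle : Rbar_le (phi n G (S q) t i - tau q) l).
    { apply (is_lim_seq_le (fun _ => phi n G (S q) t i - tau q) (fun d => phi n G (d + S q) t i)).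
      intros d. assert (Hb := Hbd q (d + S q)%nat t i ltac:(lia) Ht Hi). apply Rabs_le_between in Hb. lra.
      apply is_lim_seq_const. exact Hl. }
    unfold Rbar_le in Hle. lra.
  - assert (Hle : Rbar_le l (phi n G (S q) t i + tau q)).
    { apply (is_lim_seq_le (fun d => phi n G (d + S q) t i) (fun _ => phi n G (S q) t i + tau q)).
      intros d. assert (Hb := Hbd q (d + S q)%nat t i ltac:(lia) Ht Hi). apply Rabs_le_between in Hb. lra.
      exact Hl. apply is_lim_seq_const. }
    unfold Rbar_le in Hle. lra.
Qed.


Lemma wsol_0 n G i : wsol n G 0 i = 0.
Proof.
  unfold wsol. rewrite (Lim_seq_ext _ (fun _ => 0)). rewrite Lim_seq_const. reflexivity.
  intros k. apply phi_0.
Qed.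

Lemma wsol_box n G A C t : ODEH n G A C -> 0 <= t -> box n (Pb A C t) (wsol n G t).
Proof.
  intros H0 Ht j Hj. pose proof H0 as (HA & HC & HL & HGr).
  destruct (picard_conv n G A C t H0 Ht) as [L [_ [_ [tau [_ [_ Hc]]]]]].
  destruct (Hc O t j ltac:(lra) Hj) as [Hl _].
  assert (Hb : forall k, 0 <= phi n G k t j <= Pb A C t).
  { intros k. apply (Inv_all n G A C k HA HC HL HGr). exact Ht. exact Hj. }
  split.
  - assert (H := is_lim_seq_le (fun _ => 0) _ 0 _ (fun k => proj1 (Hb k)) (is_lim_seq_const 0) Hl).
    exact H.
  - assert (H := is_lim_seq_le _ (fun _ => Pb A C t) _ (Pb A C t) (fun k => proj2 (Hb k)) Hl (is_lim_seq_const _)).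
    exact H.
Qed.

Lemma phi_time_lip n G A C T k s t i : ODEH n G A C -> 0 <= s <= T -> 0 <= t <= T -> (i < n)%nat ->
  Rabs (phi n G k s i - phi n G k t i) <= (A + C * Pb A C T) * Rabs (s - t).
Proof.
  intros H0 Hs Ht Hi. pose proof H0 as (HA & HC & HL & HGr).
  assert (HK : 0 <= A + C * Pb A C T).
  { assert (0 <= Pb A C T) by (apply Pb_nonneg; lra). assert (0 <= C * Pb A C T) by (apply Rmult_le_pos; lra). lra. }
  destruct k as [|k].
  - simpl. rewrite Rminus_diag, Rabs_R0. apply Rmult_le_pos. exact HK. apply Rabs_pos.
  - assert (HI := Inv_all n G A C k HA HC HL HGr).
    destruct (MVT_gen (fun s => phi n G (S k) s i) t s (fun x => G (phi n G k (Rmax 0 x)) i)) as [c [Hc Heq]].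
    + intros x _. apply (phi_deriv n G A C); auto.
    + intros x _. apply continuity_pt_filterlim. apply (cont_of_derive _ _ _ (phi_deriv n G A C k i x HA HC HL HI Hi)).
    + rewrite Heq, Rabs_mult. apply Rmult_le_compat_r. apply Rabs_pos.
      assert (Hc1 := Rmin_l t s). assert (Hc2 := Rmax_r t s).
      assert (Hm1 : Rmin t s >= 0) by (unfold Rmin; destruct Rle_dec; lra).
      assert (Hm2 : Rmax t s <= T) by (unfold Rmax; destruct Rle_dec; lra).
      rewrite Rmax_right by lra.
      destruct (HGr (Pb A C T) (phi n G k c) i) as [Hg1 Hg2]. apply Pb_nonneg; lra.
      apply box_mono with (Pb A C c). apply Pb_mono; lra. apply HI. lra. exact Hi.
      rewrite Rabs_right by lra. lra.
Qed.

Lemma wsol_time_lip n G A C T s t i : ODEH n G A C -> 0 <= s <= T -> 0 <= t <= T -> (i < n)%nat ->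
  Rabs (wsol n G s i - wsol n G t i) <= (A + C * Pb A C T) * Rabs (s - t).
Proof.
  intros H0 Hs Ht Hi.
  destruct (picard_conv n G A C T H0 ltac:(lra)) as [L [_ [_ [tau [_ [_ Hc]]]]]].
  destruct (Hc O s i Hs Hi) as [Hls _]. destruct (Hc O t i Ht Hi) as [Hlt _].
  assert (Hd := is_lim_seq_minus' _ _ _ _ Hls Hlt).
  set (K := (A + C * Pb A C T) * Rabs (s - t)).
  assert (Hb : forall k, - K <= phi n G k s i - phi n G k t i <= K).
  { intros k. apply Rabs_le_between. unfold K.
    apply (phi_time_lip n G A C T k s t i H0 Hs Ht Hi). }
  apply Rabs_le. split.
  - exact (is_lim_seq_le (fun _ => - K) _ _ _ (fun k => proj1 (Hb k)) (is_lim_seq_const _) Hd).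
  - exact (is_lim_seq_le _ (fun _ => K) _ _ (fun k => proj2 (Hb k)) Hd (is_lim_seq_const _)).
Qed.

Lemma wsol_cont n G A C T j z : ODEH n G A C -> 0 < z < T -> (j < n)%nat ->
  continuous (fun s => wsol n G s j) z.
Proof.
  intros H0 Hz Hj. apply eps_cont. intros eps He.
  set (K := A + C * Pb A C T).
  assert (HK : 0 <= K). { pose proof H0 as (HA & HC & _ & _). unfold K.
    assert (0 <= Pb A C T) by (apply Pb_nonneg; lra). assert (0 <= C * Pb A C T) by (apply Rmult_le_pos; lra). lra. }
  exists (Rmin (eps / (K + 1)) (Rmin z (T - z))). split.
  apply Rmin_pos. apply Rdiv_lt_0_compat; lra. apply Rmin_pos; lra.
  intros s Hs. assert (H1 := Rmin_l (eps / (K + 1)) (Rmin z (T - z))).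
  assert (H2 := Rmin_r (eps / (K + 1)) (Rmin z (T - z))).
  assert (H3 := Rmin_l z (T - z)). assert (H4 := Rmin_r z (T - z)).
  apply Rabs_def2 in Hs as Hs'.
  eapply Rle_lt_trans. apply (wsol_time_lip n G A C T); auto; lra.
  apply Rle_lt_trans with (K * (eps / (K + 1))).
  apply Rmult_le_compat_l. exact HK. lra.
  assert (0 < eps / (K+1)) by (apply Rdiv_lt_0_compat; lra).
  apply Rlt_le_trans with ((K+1) * (eps / (K+1))). nra. right. field. lra.
Qed.

Lemma wmax_cont n G A C T j z : ODEH n G A C -> z < T -> 0 < T -> (j < n)%nat ->
  continuous (fun s => wsol n G (Rmax 0 s) j) z.
Proof.
  intros H0 Hz HT Hj. apply eps_cont. intros eps He.
  set (K := A + C * Pb A C T).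
  assert (HK : 0 <= K). { pose proof H0 as (HA & HC & _ & _). unfold K.
    assert (0 <= Pb A C T) by (apply Pb_nonneg; lra). assert (0 <= C * Pb A C T) by (apply Rmult_le_pos; lra). lra. }
  exists (Rmin (eps / (K + 1)) (T - z)). split.
  apply Rmin_pos. apply Rdiv_lt_0_compat; lra. lra.
  intros s Hs. assert (H1 := Rmin_l (eps / (K + 1)) (T - z)).
  assert (H2 := Rmin_r (eps / (K + 1)) (T - z)).
  assert (Hm := Rmax0_lip s z).
  assert (Hs1 := Rmax_l 0 s). assert (Hz1 := Rmax_l 0 z).
  assert (Hs2 : Rmax 0 s <= T) by (apply Rabs_def2 in Hs; unfold Rmax; destruct Rle_dec; lra).
  assert (Hz2 : Rmax 0 z <= T) by (unfold Rmax; destruct Rle_dec; lra).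
  eapply Rle_lt_trans. apply (wsol_time_lip n G A C T); auto; lra.
  apply Rle_lt_trans with (K * (eps / (K + 1))).
  apply Rmult_le_compat_l. exact HK. lra.
  assert (0 < eps / (K+1)) by (apply Rdiv_lt_0_compat; lra).
  apply Rlt_le_trans with ((K+1) * (eps / (K+1))). nra. right. field. lra.
Qed.

Lemma h_cont n G A C i z : ODEH n G A C -> (i < n)%nat ->
  continuous (fun s => G (wsol n G (Rmax 0 s)) i) z.
Proof.
  intros H0 Hi. pose proof H0 as (HA & HC & HL & HGr).
  set (T := Rmax 0 z + 1). assert (Hz1 := Rmax_l 0 z). assert (Hz2 := Rmax_r 0 z).
  apply (G_cont n G HL (fun s => wsol n G (Rmax 0 s)) z (Pb A C T) i).
  apply Pb_nonneg; unfold T; lra. exact Hi.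
  intros j Hj. apply (wmax_cont n G A C T); auto; unfold T; lra.
  exists 1. split. lra. intros s Hs.
  apply box_mono with (Pb A C (Rmax 0 s)). apply Pb_mono; auto.
  assert (H := Rmax0_lip s z). unfold T. apply Rabs_le_between in H. lra.
  apply wsol_box; auto. apply Rmax_l.
Qed.

Lemma ex_h n G A C i a b : ODEH n G A C -> (i < n)%nat ->
  ex_RInt (fun s => G (wsol n G (Rmax 0 s)) i) a b.
Proof. intros. apply ex_RInt_cont_R. intros z _. apply (h_cont n G A C); auto. Qed.



Lemma wsol_int n G A C t i : ODEH n G A C -> 0 <= t -> (i < n)%nat ->
  wsol n G t i = RInt (fun s => G (wsol n G (Rmax 0 s)) i) 0 t.
Proof.
  intros H0 Ht Hi. pose proof H0 as (HA & HC & HL & HGr).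
  destruct (picard_conv n G A C t H0 Ht) as [L [HL0 [HLip [tau [Htl [Ht0 Hc]]]]]].
  set (E := Rabs (wsol n G t i - RInt (fun s => G (wsol n G (Rmax 0 s)) i) 0 t)).
  assert (HE : forall q, E <= tau (S q) + L * tau q * t).
  { intros q. unfold E.

    replace (wsol n G t i - RInt (fun s => G (wsol n G (Rmax 0 s)) i) 0 t) with
      ((wsol n G t i - phi n G (S (S q)) t i) + (RInt (fun s => G (phi n G (S q) (Rmax 0 s)) i) 0 t
        - RInt (fun s => G (wsol n G (Rmax 0 s)) i) 0 t)).
    2: { rewrite (phi_S n G (S q) t i Hi). ring. }
    eapply Rle_trans. apply Rabs_triang. apply Rplus_le_compat.
    apply (Hc (S q) t i). lra. exact Hi.
    rewrite <- RInt_minus_R. 2: apply (ex_integrand n G A C); auto. 2: apply (ex_h n G A C); auto.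
    replace (L * tau q * t) with ((L * tau q) * t ^ 1 / INR 1) by (simpl; field).
    apply RInt_abs_bound with (b := fun s => (L * tau q) * s ^ 0). exact Ht.
    apply ex_RInt_minus_R. apply (ex_integrand n G A C); auto. apply (ex_h n G A C); auto.
    apply RInt_pow.
    intros x Hx. rewrite Rmax_right by lra. simpl. rewrite Rmult_1_r.
    apply HLip.
    - apply box_mono with (Pb A C x). apply Pb_mono; lra. apply (Inv_all n G A C (S q) HA HC HL HGr). lra.
    - apply box_mono with (Pb A C x). apply Pb_mono; lra. apply wsol_box; auto; lra.
    - apply Ht0.
    - intros j Hj. rewrite Rabs_minus_sym. apply (Hc q x j). lra. exact Hj.
    - exact Hi. }
  assert (Hlim : is_lim_seq (fun q => tau (S q) + L * tau q * t) 0).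
  { replace (Finite 0) with (Finite (0 + L * 0 * t)) by (f_equal; ring).
    apply is_lim_seq_plus'. apply (is_lim_seq_incr_1 tau 0) in Htl. exact Htl.
    apply is_lim_seq_mult'. apply is_lim_seq_mult'. apply is_lim_seq_const. exact Htl. apply is_lim_seq_const. }
  assert (HE0 : E <= 0).
  { exact (is_lim_seq_le (fun _ => E) _ E 0 HE (is_lim_seq_const E) Hlim). }
  assert (0 <= E) by apply Rabs_pos. unfold E in *.
  assert (Rabs (wsol n G t i - RInt (fun s => G (wsol n G (Rmax 0 s)) i) 0 t) = 0) by lra.
  apply Rabs_eq_0 in H1. lra.
Qed.

Lemma wsol_deriv n G A C t i : ODEH n G A C -> 0 < t -> (i < n)%nat ->
  is_derive (fun s => wsol n G s i) t (G (wsol n G t) i).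
Proof.
  intros H0 Ht Hi.
  set (h := fun s => G (wsol n G (Rmax 0 s)) i).
  apply (is_derive_ext_loc (fun s => RInt h 0 s)).
  - apply (locally_interval _ t 0 p_infty). simpl; lra. simpl; auto.
    intros y Hy _. simpl in Hy. unfold h. rewrite (wsol_int n G A C y i); auto. lra.
  - replace (G (wsol n G t) i) with (h t) by (unfold h; rewrite Rmax_right by lra; reflexivity).
    apply (@is_derive_RInt R_NormedModule h (fun s => RInt h 0 s) 0 t).
    apply filter_forall. intros b. apply RInt_correct_R. apply (ex_h n G A C); auto.
    apply (h_cont n G A C); auto.
Qed.

Lemma wsol_mono n G A C s t i : ODEH n G A C -> 0 <= s <= t -> (i < n)%nat ->
  wsol n G s i <= wsol n G t i.
Proof.
  intros H0 Hst Hi. pose proof H0 as (HA & HC & HL & HGr).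
  rewrite (wsol_int n G A C s i), (wsol_int n G A C t i) by (auto; lra).
  rewrite <- (RInt_Chasles (V:=R_CompleteNormedModule) _ 0 s t) by (apply (ex_h n G A C); auto).
  change (plus ?a ?b) with (a + b).
  assert (0 <= RInt (fun s0 : R => G (wsol n G (Rmax 0 s0)) i) s t).
  { apply RInt_ge_0. lra. apply (ex_h n G A C); auto.
    intros x Hx. rewrite Rmax_right by lra.
    apply (HGr (Pb A C x)). apply Pb_nonneg; lra. apply wsol_box; auto; lra. exact Hi. }
  lra.
Qed.

Lemma wsol_right0 n G A C i : ODEH n G A C -> (i < n)%nat ->
  filterlim (fun s => wsol n G s i) (at_right 0) (locally 0).
Proof.
  intros H0 Hi. pose proof H0 as (HA & HC & HL & HGr).
  apply filterlim_locally. intros [e He].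
  set (K := A + C * Pb A C 1).
  assert (HK : 0 <= K). { unfold K.
    assert (0 <= Pb A C 1) by (apply Pb_nonneg; lra). assert (0 <= C * Pb A C 1) by (apply Rmult_le_pos; lra). lra. }
  assert (HK1 : 0 < K + 1) by lra.
  exists (mkposreal (Rmin 1 (e / (K + 1))) (Rmin_pos _ _ Rlt_0_1 (Rdiv_lt_0_compat _ _ He HK1))).
  intros y Hy Hy0. apply ballR in Hy. simpl in Hy. apply ballR.
  assert (H1 := Rmin_l 1 (e / (K + 1))). assert (H2 := Rmin_r 1 (e / (K + 1))).
  assert (Hy2 : Rabs (y - 0) < Rmin 1 (e / (K + 1))) by exact Hy. rewrite Rminus_0_r in Hy2. rewrite Rabs_right in Hy2 by lra. simpl.
  assert (Hb := wsol_time_lip n G A C 1 y 0 i H0 ltac:(lra) ltac:(lra) Hi).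
  rewrite wsol_0, Rminus_0_r in Hb. rewrite Rminus_0_r.
  eapply Rle_lt_trans. exact Hb. rewrite Rabs_right by lra.
  apply Rle_lt_trans with (K * (e / (K + 1))). apply Rmult_le_compat_l; lra.
  assert (0 < e / (K+1)) by (apply Rdiv_lt_0_compat; lra).
  apply Rlt_le_trans with ((K+1) * (e / (K+1))). nra. right. field. lra.
Qed.

Lemma ode_exists n G A C : ODEH n G A C ->
  (forall i, wsol n G 0 i = 0) /\
  (forall t, 0 <= t -> box n (Pb A C t) (wsol n G t)) /\
  (forall s t i, 0 <= s <= t -> (i < n)%nat -> wsol n G s i <= wsol n G t i) /\
  (forall i, (i < n)%nat -> filterlim (fun s => wsol n G s i) (at_right 0) (locally 0)) /\
  (forall t i, 0 < t -> (i < n)%nat -> is_derive (fun s => wsol n G s i) t (G (wsol n G t) i)).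
Proof.
  intros H0. split. apply wsol_0. split. intros. apply wsol_box; auto.
  split. intros. apply (wsol_mono n G A C); auto.
  split. intros. apply (wsol_right0 n G A C); auto.
  intros. apply (wsol_deriv n G A C); auto.
Qed.


Lemma ln_le' x y : 0 < x -> x <= y -> ln x <= ln y.
Proof. intros Hx [H|H]. left. apply ln_increasing; auto. right. subst. auto. Qed.

Lemma ln_le_xm1 y : 0 < y -> ln y <= y - 1.
Proof.
  intros Hy. assert (H := exp_ineq1_le (y - 1)).
  rewrite <- (ln_exp (y - 1)). apply ln_le'. exact Hy. lra.
Qed.

Lemma sq_facts x : 1 <= x ->
  0 <= sqrt (x * x - 1) /\ sqrt (x * x - 1) * sqrt (x * x - 1) = x * x - 1 /\ sqrt (x * x - 1) <= x.
Proof.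
  intros Hx. assert (H0 : 0 <= x * x - 1) by nra.
  assert (H1 := sqrt_pos (x * x - 1)). assert (H2 := sqrt_sqrt _ H0).
  split. exact H1. split. exact H2. nra.
Qed.

Lemma arccosh_exp y : 1 <= y -> exp (arccosh y) = y + sqrt (y * y - 1).
Proof.
  intros Hy. unfold arccosh. apply exp_ln. destruct (sq_facts y Hy) as [H1 _]. lra.
Qed.

Lemma arccosh_nonneg y : 1 <= y -> 0 <= arccosh y.
Proof.
  intros Hy. unfold arccosh. destruct (sq_facts y Hy) as [H1 _].
  rewrite <- ln_1. apply ln_le'; lra.
Qed.

Lemma arccosh_pos y : 1 < y -> 0 < arccosh y.
Proof.
  intros Hy. unfold arccosh. destruct (sq_facts y ltac:(lra)) as [H1 _].
  rewrite <- ln_1. apply ln_increasing; lra.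
Qed.

Lemma arccosh_mono y z : 1 <= y -> y <= z -> arccosh y <= arccosh z.
Proof.
  intros Hy Hz. unfold arccosh. destruct (sq_facts y Hy) as [H1 _].
  apply ln_le'. lra. apply Rplus_le_compat. exact Hz. apply sqrt_le_1_alt. nra.
Qed.

Lemma arccosh_le_ln y : 1 <= y -> arccosh y <= ln (2 * y).
Proof.
  intros Hy. unfold arccosh. destruct (sq_facts y Hy) as [H1 [_ H3]].
  apply ln_le'; lra.
Qed.

Lemma arccosh_1 : arccosh 1 = 0.
Proof. unfold arccosh. replace (1 * 1 - 1) with 0 by ring. rewrite sqrt_0, Rplus_0_r. apply ln_1. Qed.

Lemma arccosh_small y : 1 <= y -> arccosh y <= (y - 1) + sqrt (y * y - 1).
Proof.
  intros Hy. unfold arccosh. destruct (sq_facts y Hy) as [H1 _].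
  assert (H := ln_le_xm1 (y + sqrt (y * y - 1)) ltac:(lra)). lra.
Qed.

Lemma arccosh_near1 eta : 0 < eta -> exists d, 0 < d /\ forall y, 1 <= y <= 1 + d -> arccosh y < eta.
Proof.
  intros He. set (d := Rmin 1 (eta * eta / 16)).
  assert (Hd1 := Rmin_l 1 (eta * eta / 16)). assert (Hd2 := Rmin_r 1 (eta * eta / 16)).
  assert (Hd : 0 < d) by (apply Rmin_pos; nra).
  exists d. split. exact Hd. intros y Hy.
  eapply Rle_lt_trans. apply arccosh_small. lra.
  assert (Hs : sqrt (y * y - 1) <= sqrt (eta * eta / 4)).
  { apply sqrt_le_1_alt. fold d in Hd1, Hd2. nra. }
  replace (eta * eta / 4) with ((eta / 2) * (eta / 2)) in Hs by field.
  rewrite sqrt_square in Hs by lra. fold d in Hd1, Hd2.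
  assert (d < eta / 2) by nra. lra.
Qed.

Lemma cosh_2ach X : 1 <= X -> cosh (2 * arccosh X) = 2 * X * X - 1.
Proof.
  intros HX. destruct (sq_facts X HX) as [H1 [H2 H3]].
  set (s := sqrt (X * X - 1)) in *.
  unfold cosh. replace (2 * arccosh X) with (arccosh X + arccosh X) by ring.
  rewrite Ropp_plus_distr, !exp_plus, !exp_Ropp, arccosh_exp by auto. fold s.
  assert (Hp : 0 < X + s) by lra.
  assert (Hinv : / (X + s) = X - s). { field_simplify_eq. nra. lra. }
  rewrite Hinv. nra.
Qed.

Lemma sinh_2ach X : 1 <= X -> sinh (2 * arccosh X) = 2 * X * sqrt (X * X - 1).
Proof.
  intros HX. destruct (sq_facts X HX) as [H1 [H2 H3]].
  set (s := sqrt (X * X - 1)) in *.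
  unfold sinh. replace (2 * arccosh X) with (arccosh X + arccosh X) by ring.
  rewrite Ropp_plus_distr, !exp_plus, !exp_Ropp, arccosh_exp by auto. fold s.
  assert (Hp : 0 < X + s) by lra.
  assert (Hinv : / (X + s) = X - s). { field_simplify_eq. nra. lra. }
  rewrite Hinv. nra.
Qed.

Definition cl (x : R) := 2 * x * x - 1.
Definition sl (x : R) := 2 * x * sqrt (x * x - 1).
Definition Qf (xa xb xc : R) := (cl xa + cl xb * cl xc) / (sl xb * sl xc).

Lemma sl_pos x : 1 < x -> 0 < sl x.
Proof.
  intros Hx. unfold sl. assert (0 < sqrt (x * x - 1)) by (apply sqrt_lt_R0; nra). nra.
Qed.

Lemma sl_le x : 1 <= x -> sl x <= 2 * (x * x).
Proof. intros Hx. unfold sl. destruct (sq_facts x Hx) as [H1 [H2 H3]]. nra. Qed.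

Lemma cl_sl x : 1 <= x -> cl x * cl x - sl x * sl x = 1.
Proof. intros Hx. unfold cl, sl. destruct (sq_facts x Hx) as [H1 [H2 H3]]. nra. Qed.

Lemma clcl_ge x y : 1 <= x -> 1 <= y -> sl x * sl y + 1 <= cl x * cl y.
Proof.
  intros Hx Hy. assert (Ex := cl_sl x Hx). assert (Ey := cl_sl y Hy).
  assert (Hsx : 0 <= sl x) by (unfold sl; destruct (sq_facts x Hx); nra).
  assert (Hsy : 0 <= sl y) by (unfold sl; destruct (sq_facts y Hy); nra).
  assert (Hcx : 1 <= cl x) by (unfold cl; nra). assert (Hcy : 1 <= cl y) by (unfold cl; nra).
  assert (Hsq : (sl x * sl y + 1) * (sl x * sl y + 1) <= (cl x * cl y) * (cl x * cl y)).
  { replace ((cl x * cl y) * (cl x * cl y)) with ((cl x * cl x) * (cl y * cl y)) by ring.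
    replace (cl x * cl x) with (sl x * sl x + 1) by lra.
    replace (cl y * cl y) with (sl y * sl y + 1) by lra.
    pose proof (Rle_0_sqr (sl x - sl y)). unfold Rsqr in *. nra. }
  apply Rsqr_incr_0_var. unfold Rsqr. exact Hsq. nra.
Qed.

Lemma Q_lower xa xb xc : 1 <= xa -> 1 < xb -> 1 < xc ->
  xa * xa / (4 * (xb * xb) * (xc * xc)) <= Qf xa xb xc - 1.
Proof.
  intros Ha Hb Hc.
  assert (Hsb := sl_pos xb Hb). assert (Hsc := sl_pos xc Hc).
  assert (Hlb := sl_le xb ltac:(lra)). assert (Hlc := sl_le xc ltac:(lra)).
  assert (Hcc := clcl_ge xb xc ltac:(lra) ltac:(lra)).
  assert (Hca : xa * xa <= cl xa) by (unfold cl; nra).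
  unfold Qf.
  replace ((cl xa + cl xb * cl xc) / (sl xb * sl xc) - 1)
    with ((cl xa + (cl xb * cl xc - sl xb * sl xc)) / (sl xb * sl xc)) by (field; lra).
  unfold Rdiv. apply Rle_trans with (cl xa * / (sl xb * sl xc)).
  - apply Rmult_le_compat. nra. apply Rlt_le, Rinv_0_lt_compat. nra. exact Hca.
    apply Rinv_le_contravar. nra. nra.
  - apply Rmult_le_compat_r. apply Rlt_le, Rinv_0_lt_compat. nra. lra.
Qed.

Lemma Q_ge1 xa xb xc : 1 <= xa -> 1 < xb -> 1 < xc -> 1 <= Qf xa xb xc.
Proof.
  intros Ha Hb Hc. assert (H := Q_lower xa xb xc Ha Hb Hc).
  assert (0 <= xa * xa / (4 * (xb * xb) * (xc * xc))).
  { apply Rmult_le_pos. nra. apply Rlt_le, Rinv_0_lt_compat.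
    apply Rmult_lt_0_compat; [apply Rmult_lt_0_compat|]; nra. }
  lra.
Qed.

Lemma Q_upper xa xb xc sb sc : 1 <= xa -> 1 < xb -> 1 < xc -> 0 < sb -> sb <= sl xb ->
  0 < sc -> sc <= sl xc ->
  Qf xa xb xc <= 4 * (xa * xa + (xb * xb) * (xc * xc)) / (sb * sc).
Proof.
  intros Ha Hb Hc Hsb Hb' Hsc Hc'. unfold Qf. unfold Rdiv.
  assert (H1 : 1 <= cl xa) by (unfold cl; nra).
  assert (H2 : 1 <= cl xb) by (unfold cl; nra).
  assert (H3 : 1 <= cl xc) by (unfold cl; nra).
  assert (H4 : cl xa <= 2 * (xa * xa)) by (unfold cl; nra).
  assert (H5 : cl xb <= 2 * (xb * xb)) by (unfold cl; nra).
  assert (H6 : cl xc <= 2 * (xc * xc)) by (unfold cl; nra).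
  assert (H7 : cl xb * cl xc <= 2 * (xb * xb) * (2 * (xc * xc))) by (apply Rmult_le_compat; lra).
  apply Rmult_le_compat.
  - nra.
  - apply Rlt_le, Rinv_0_lt_compat. nra.
  - nra.
  - apply Rinv_le_contravar. nra. apply Rmult_le_compat; lra.
Qed.

Lemma cs_ratio x : 1 < x -> cl x / sl x <= (x * x) / (x * x - 1).
Proof.
  intros Hx. destruct (sq_facts x ltac:(lra)) as [H1 [H2 H3]].
  assert (Hs : 0 < sqrt (x * x - 1)) by (apply sqrt_lt_R0; nra).
  unfold cl, sl. set (s := sqrt (x * x - 1)) in *.
  assert (Hx1 : 0 < x * x - 1) by nra. assert (Hxs : 0 < 2 * x * s) by nra.
  apply Rmult_le_reg_r with (2 * x * s * (x * x - 1)). apply Rmult_lt_0_compat; auto.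
  replace ((2 * x * x - 1) / (2 * x * s) * (2 * x * s * (x * x - 1))) with ((2 * x * x - 1) * (x * x - 1)) by (field; lra).
  replace (x * x / (x * x - 1) * (2 * x * s * (x * x - 1))) with (x * x * 2 * x * s) by (field; lra).
  replace ((2 * x * x - 1) * (x * x - 1)) with ((2 * x * x - 1) * s * s) by (rewrite Rmult_assoc, H2; ring).
  nra.
Qed.

Lemma Q_upper_lim xa xb xc m : 1 <= xa -> 2 <= xb -> 2 <= xc -> 4 <= m ->
  m <= xb * xb -> m <= xc * xc ->
  Qf xa xb xc - 1 <= 2 * (xa * xa) / ((xb * xb) * (xc * xc)) + 3 / (m - 1).
Proof.
  intros Ha Hb Hc Hm Hmb Hmc.
  assert (Hsb := sl_pos xb ltac:(lra)). assert (Hsc := sl_pos xc ltac:(lra)).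
  assert (Hrb := cs_ratio xb ltac:(lra)). assert (Hrc := cs_ratio xc ltac:(lra)).
  assert (Hcb : 0 <= cl xb) by (unfold cl; nra). assert (Hcc : 0 <= cl xc) by (unfold cl; nra).
  unfold Qf.
  replace ((cl xa + cl xb * cl xc) / (sl xb * sl xc) - 1)
    with (cl xa / (sl xb * sl xc) + ((cl xb / sl xb) * (cl xc / sl xc) - 1)) by (field; lra).
  apply Rplus_le_compat.
  - destruct (sq_facts xb ltac:(lra)) as [B1 [B2 B3]]. destruct (sq_facts xc ltac:(lra)) as [C1 [C2 C3]].
    assert (Hb2 : xb <= 2 * sqrt (xb * xb - 1)) by nra.
    assert (Hc2 : xc <= 2 * sqrt (xc * xc - 1)) by nra.
    assert (Hlb : xb * xb <= sl xb) by (unfold sl; nra).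
    assert (Hlc : xc * xc <= sl xc) by (unfold sl; nra).
    unfold Rdiv. apply Rmult_le_compat.
    + unfold cl; nra.
    + apply Rlt_le, Rinv_0_lt_compat. nra.
    + unfold cl; nra.
    + apply Rinv_le_contravar. nra. nra.
  - assert (Hrb0 : 0 <= cl xb / sl xb) by (apply Rmult_le_pos; [lra | apply Rlt_le, Rinv_0_lt_compat; lra]).
    assert (Hrc0 : 0 <= cl xc / sl xc) by (apply Rmult_le_pos; [lra | apply Rlt_le, Rinv_0_lt_compat; lra]).
    apply Rle_trans with ((xb * xb) / (xb * xb - 1) * ((xc * xc) / (xc * xc - 1)) - 1).
    { apply Rplus_le_compat_r. apply Rmult_le_compat; auto. }
    set (u := xb * xb) in *. set (v := xc * xc) in *.
    replace (u / (u - 1) * (v / (v - 1)) - 1) with (1 / (u - 1) + 1 / (v - 1) + 1 / ((u - 1) * (v - 1))) by (field; lra).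
    assert (1 / (u - 1) <= 1 / (m - 1)) by (apply Rmult_le_compat_l; [lra | apply Rinv_le_contravar; lra]).
    assert (1 / (v - 1) <= 1 / (m - 1)) by (apply Rmult_le_compat_l; [lra | apply Rinv_le_contravar; lra]).
    assert (1 / ((u - 1) * (v - 1)) <= 1 / (m - 1)) by (apply Rmult_le_compat_l; [lra | apply Rinv_le_contravar; nra]).
    replace (3 / (m - 1)) with (1 / (m - 1) + 1 / (m - 1) + 1 / (m - 1)) by (field; lra). lra.
Qed.


Definition LB n M (F : (nat -> R) -> R) L B :=
  0 <= L /\ 0 <= B /\ (forall x, box n M x -> Rabs (F x) <= B) /\
  (forall x y d, box n M x -> box n M y -> 0 <= d -> close n d x y -> Rabs (F x - F y) <= L * d).
Definition LBe n M F := exists L B, LB n M F L B.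

Lemma LBe_ext n M F G : (forall x, box n M x -> F x = G x) -> LBe n M F -> LBe n M G.
Proof.
  intros He [L [B (H1 & H2 & H3 & H4)]]. exists L, B. split; auto. split; auto. split.
  intros x Hx. rewrite <- He; auto.
  intros x y d Hx Hy Hd Hc. rewrite <- !He; auto.
Qed.

Lemma LBe_const n M c : LBe n M (fun _ => c).
Proof.
  exists 0, (Rabs c). split. lra. split. apply Rabs_pos. split. intros; lra.
  intros. rewrite Rminus_diag, Rabs_R0. lra.
Qed.

Lemma LBe_coord n M j : (j < n)%nat -> 0 <= M -> LBe n M (fun x => x j).
Proof.
  intros Hj HM. exists 1, M. split. lra. split. exact HM. split.
  intros x Hx. destruct (Hx j Hj). rewrite Rabs_right; lra.
  intros x y d Hx Hy Hd Hc. rewrite Rmult_1_l. apply Hc, Hj.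
Qed.

Lemma LBe_plus n M F G : LBe n M F -> LBe n M G -> LBe n M (fun x => F x + G x).
Proof.
  intros [L1 [B1 (A1 & A2 & A3 & A4)]] [L2 [B2 (C1 & C2 & C3 & C4)]].
  exists (L1 + L2), (B1 + B2). split. lra. split. lra. split.
  intros x Hx. eapply Rle_trans. apply Rabs_triang. specialize (A3 x Hx). specialize (C3 x Hx). lra.
  intros x y d Hx Hy Hd Hc.
  replace (F x + G x - (F y + G y)) with ((F x - F y) + (G x - G y)) by ring.
  eapply Rle_trans. apply Rabs_triang. specialize (A4 x y d Hx Hy Hd Hc). specialize (C4 x y d Hx Hy Hd Hc). lra.
Qed.

Lemma LBe_mult n M F G : LBe n M F -> LBe n M G -> LBe n M (fun x => F x * G x).
Proof.
  intros [L1 [B1 (A1 & A2 & A3 & A4)]] [L2 [B2 (C1 & C2 & C3 & C4)]].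
  exists (B1 * L2 + B2 * L1), (B1 * B2). split. nra. split. nra. split.
  intros x Hx. rewrite Rabs_mult. specialize (A3 x Hx). specialize (C3 x Hx).
  apply Rmult_le_compat; auto; apply Rabs_pos.
  intros x y d Hx Hy Hd Hc.
  replace (F x * G x - F y * G y) with (F x * (G x - G y) + G y * (F x - F y)) by ring.
  eapply Rle_trans. apply Rabs_triang. rewrite !Rabs_mult.
  specialize (A4 x y d Hx Hy Hd Hc). specialize (C4 x y d Hx Hy Hd Hc).
  specialize (A3 x Hx). specialize (C3 y Hy).
  assert (Rabs (F x) * Rabs (G x - G y) <= B1 * (L2 * d)) by (apply Rmult_le_compat; auto; apply Rabs_pos).
  assert (Rabs (G y) * Rabs (F x - F y) <= B2 * (L1 * d)) by (apply Rmult_le_compat; auto; apply Rabs_pos).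
  nra.
Qed.

Definition LipLoc (h : R -> R) (lo : R) :=
  forall a b, lo <= a -> exists K, 0 <= K /\
    forall u v, a <= u <= b -> a <= v <= b -> Rabs (h u - h v) <= K * Rabs (u - v).

Lemma LBe_comp n M F h lo : LBe n M F -> (forall x, box n M x -> lo <= F x) -> LipLoc h lo ->
  LBe n M (fun x => h (F x)).
Proof.
  intros [L [B (A1 & A2 & A3 & A4)]] Hlo Hh.
  destruct (Hh lo B (Rle_refl lo)) as [K [HK HKl]].
  exists (K * L), (K * Rabs (B - lo) + Rabs (h lo)). split. nra. split.
  assert (0 <= Rabs (B - lo)) by apply Rabs_pos. assert (0 <= Rabs (h lo)) by apply Rabs_pos. nra.
  split.
  - intros x Hx. specialize (A3 x Hx). specialize (Hlo x Hx). apply Rabs_le_between in A3.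
    assert (H := HKl (F x) lo ltac:(lra) ltac:(lra)).
    replace (h (F x)) with ((h (F x) - h lo) + h lo) by ring.
    eapply Rle_trans. apply Rabs_triang. apply Rplus_le_compat_r.
    eapply Rle_trans. exact H. apply Rmult_le_compat_l. exact HK.
    rewrite !Rabs_right by lra. lra.
  - intros x y d Hx Hy Hd Hc.
    assert (Ax := A3 x Hx). assert (Ay := A3 y Hy). apply Rabs_le_between in Ax, Ay.
    assert (Lx := Hlo x Hx). assert (Ly := Hlo y Hy).
    eapply Rle_trans. apply HKl; lra.
    rewrite Rmult_assoc. apply Rmult_le_compat_l. exact HK. apply A4; auto.
Qed.

Lemma lip_deriv h dh a b K :
  (forall z, a <= z <= b -> is_derive h z (dh z)) -> (forall z, a <= z <= b -> Rabs (dh z) <= K) ->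
  forall u v, a <= u <= b -> a <= v <= b -> Rabs (h u - h v) <= K * Rabs (u - v).
Proof.
  intros Hd HK u v Hu Hv.
  assert (Hm1 : a <= Rmin v u) by (unfold Rmin; destruct Rle_dec; lra).
  assert (Hm2 : Rmax v u <= b) by (unfold Rmax; destruct Rle_dec; lra).
  destruct (MVT_gen h v u dh) as [c [Hc Heq]].
  - intros x Hx. apply Hd. lra.
  - intros x Hx. apply continuity_pt_filterlim. apply (cont_of_derive _ _ _ (Hd x ltac:(lra))).
  - rewrite Heq, Rabs_mult. apply Rmult_le_compat_r. apply Rabs_pos. apply HK. lra.
Qed.

Lemma LipLoc_exp lo : LipLoc exp lo.
Proof.
  intros a b _. exists (exp b). split. apply Rlt_le, exp_pos.
  apply (lip_deriv exp exp a b). intros z _. apply is_derive_exp.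
  intros z Hz. rewrite Rabs_right by (apply Rle_ge, Rlt_le, exp_pos).
  destruct Hz as [_ [H|H]]. left. apply exp_increasing; auto. subst; lra.
Qed.

Lemma LipLoc_sqrt lo : 0 < lo -> LipLoc sqrt lo.
Proof.
  intros Hlo a b Ha. exists (/ (2 * sqrt a)). split.
  apply Rlt_le, Rinv_0_lt_compat. assert (0 < sqrt a) by (apply sqrt_lt_R0; lra). lra.
  apply (lip_deriv sqrt (fun z => / (2 * sqrt z)) a b).
  intros z Hz. auto_derive. lra. field. apply Rgt_not_eq, sqrt_lt_R0. lra.
  intros z Hz. assert (0 < sqrt a) by (apply sqrt_lt_R0; lra).
  assert (sqrt a <= sqrt z) by (apply sqrt_le_1_alt; lra).
  rewrite Rabs_right. apply Rinv_le_contravar; lra.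
  apply Rle_ge, Rlt_le, Rinv_0_lt_compat. lra.
Qed.

Lemma LipLoc_ln lo : 0 < lo -> LipLoc ln lo.
Proof.
  intros Hlo a b Ha. exists (/ a). split. apply Rlt_le, Rinv_0_lt_compat. lra.
  apply (lip_deriv ln (fun z => / z) a b).
  intros z Hz. auto_derive. lra. field. lra.
  intros z Hz. rewrite Rabs_right. apply Rinv_le_contravar; lra.
  apply Rle_ge, Rlt_le, Rinv_0_lt_compat. lra.
Qed.

Lemma LipLoc_inv lo : 0 < lo -> LipLoc Rinv lo.
Proof.
  intros Hlo a b Ha. exists (/ (a * a)). split. apply Rlt_le, Rinv_0_lt_compat. nra.
  apply (lip_deriv Rinv (fun z => - / (z * z)) a b).
  intros z Hz. auto_derive. lra. field. lra.
  intros z Hz. rewrite Rabs_Ropp, Rabs_right. apply Rinv_le_contravar. nra. nra.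
  apply Rle_ge, Rlt_le, Rinv_0_lt_compat. nra.
Qed.


Definition Th (p q r : nat) (ca cb cc : R) (x : nat -> R) : R :=
  arccosh (Qf (exp (x q + x r) * ca) (exp (x r + x p) * cb) (exp (x p + x q) * cc)).

Lemma exp_ge1 z : 0 <= z -> 1 <= exp z.
Proof. intros H. rewrite <- exp_0. apply exp_le. exact H. Qed.

Lemma Xe_LBe n M a b c : (a < n)%nat -> (b < n)%nat -> 0 <= M ->
  LBe n M (fun x => exp (x a + x b) * c).
Proof.
  intros Ha Hb HM. apply LBe_mult. 2: apply LBe_const.
  apply (LBe_comp n M (fun x => x a + x b) exp 0).
  apply LBe_plus; apply LBe_coord; auto.
  intros x Hx. destruct (Hx a Ha), (Hx b Hb). lra.
  apply LipLoc_exp.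
Qed.

Lemma Xe_bounds n M a b c x : (a < n)%nat -> (b < n)%nat -> 1 < c -> box n M x ->
  c <= exp (x a + x b) * c <= exp (2 * M) * c.
Proof.
  intros Ha Hb Hc Hx. destruct (Hx a Ha), (Hx b Hb).
  assert (E1 := exp_ge1 (x a + x b) ltac:(lra)).
  assert (E2 : exp (x a + x b) <= exp (2 * M)) by (apply exp_le; lra).
  split; nra.
Qed.

Lemma sl_LBe n M F c : 1 < c -> LBe n M F -> (forall x, box n M x -> c <= F x) ->
  LBe n M (fun x => sl (F x)).
Proof.
  intros Hc HF Hlo. unfold sl. apply LBe_mult. apply LBe_mult. apply LBe_const. exact HF.
  apply (LBe_comp n M (fun x => F x * F x - 1) sqrt (c * c - 1)).
  apply LBe_plus. apply LBe_mult; auto. apply LBe_const.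
  intros x Hx. specialize (Hlo x Hx). nra.
  apply LipLoc_sqrt. nra.
Qed.

Lemma cl_LBe n M F : LBe n M F -> LBe n M (fun x => cl (F x)).
Proof.
  intros HF. unfold cl. apply LBe_plus. apply LBe_mult. apply LBe_mult. apply LBe_const. exact HF. exact HF.
  apply LBe_const.
Qed.

Lemma sl_lower x c : 1 <= c -> c <= x -> 2 * sqrt (c * c - 1) <= sl x.
Proof.
  intros Hc Hx. unfold sl. assert (H1 : sqrt (c * c - 1) <= sqrt (x * x - 1)) by (apply sqrt_le_1_alt; nra).
  assert (0 <= sqrt (c * c - 1)) by apply sqrt_pos. nra.
Qed.

Lemma Q_delta n M p q r ca cb cc x : (p < n)%nat -> (q < n)%nat -> (r < n)%nat ->
  1 < ca -> 1 < cb -> 1 < cc -> box n M x ->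
  1 + / (4 * (exp (2 * M) * cb) ^ 2 * (exp (2 * M) * cc) ^ 2) <=
  Qf (exp (x q + x r) * ca) (exp (x r + x p) * cb) (exp (x p + x q) * cc).
Proof.
  intros Hp Hq Hr Ha Hb Hc Hx.
  destruct (Xe_bounds n M q r ca x) as [A1 A2]; auto.
  destruct (Xe_bounds n M r p cb x) as [B1 B2]; auto.
  destruct (Xe_bounds n M p q cc x) as [C1 C2]; auto.
  set (Xa := exp (x q + x r) * ca) in *. set (Xb := exp (x r + x p) * cb) in *.
  set (Xc := exp (x p + x q) * cc) in *.
  assert (H := Q_lower Xa Xb Xc ltac:(lra) ltac:(lra) ltac:(lra)).
  apply Rle_trans with (1 + Xa * Xa / (4 * (Xb * Xb) * (Xc * Xc))). 2: lra.
  apply Rplus_le_compat_l. unfold Rdiv. rewrite <- (Rmult_1_l (/ (4 * _ ^ 2 * _ ^ 2))).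
  apply Rmult_le_compat. lra. apply Rlt_le, Rinv_0_lt_compat.
  apply Rmult_lt_0_compat; [apply Rmult_lt_0_compat|]; try lra; apply pow_lt; lra.
  nra. apply Rinv_le_contravar.
  apply Rmult_lt_0_compat; [apply Rmult_lt_0_compat|]; nra.
  simpl. rewrite !Rmult_1_r. apply Rmult_le_compat. nra. nra.
  apply Rmult_le_compat_l. lra. apply Rmult_le_compat; lra.
  apply Rmult_le_compat; lra.
Qed.

Lemma Th_LBe n M p q r ca cb cc : (p < n)%nat -> (q < n)%nat -> (r < n)%nat ->
  1 < ca -> 1 < cb -> 1 < cc -> 0 <= M -> LBe n M (Th p q r ca cb cc).
Proof.
  intros Hp Hq Hr Ha Hb Hc HM.
  set (Xa := fun x : nat -> R => exp (x q + x r) * ca).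
  set (Xb := fun x : nat -> R => exp (x r + x p) * cb).
  set (Xc := fun x : nat -> R => exp (x p + x q) * cc).
  assert (LA : LBe n M Xa) by (apply Xe_LBe; auto).
  assert (LBb : LBe n M Xb) by (apply Xe_LBe; auto).
  assert (LC : LBe n M Xc) by (apply Xe_LBe; auto).
  set (Qx := fun x => Qf (Xa x) (Xb x) (Xc x)).
  assert (LQ : LBe n M Qx).
  { unfold Qx, Qf, Rdiv. apply LBe_mult.
    - apply LBe_plus. apply cl_LBe; auto. apply LBe_mult; apply cl_LBe; auto.
    - set (s := 2 * sqrt (cb * cb - 1) * (2 * sqrt (cc * cc - 1))).
      assert (Hs : 0 < s). { unfold s. assert (0 < sqrt (cb * cb - 1)) by (apply sqrt_lt_R0; nra).
        assert (0 < sqrt (cc * cc - 1)) by (apply sqrt_lt_R0; nra). nra. }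
      apply (LBe_comp n M (fun x => sl (Xb x) * sl (Xc x)) Rinv s).
      apply LBe_mult. apply (sl_LBe n M Xb cb); auto. intros x Hx. apply (Xe_bounds n M r p cb x); auto.
      apply (sl_LBe n M Xc cc); auto. intros x Hx. apply (Xe_bounds n M p q cc x); auto.
      intros x Hx. unfold s.
      destruct (Xe_bounds n M r p cb x) as [B1 _]; auto. destruct (Xe_bounds n M p q cc x) as [C1 _]; auto.
      assert (S1 := sl_lower (Xb x) cb ltac:(lra) B1). assert (S2 := sl_lower (Xc x) cc ltac:(lra) C1).
      assert (0 <= sqrt (cb * cb - 1)) by apply sqrt_pos. assert (0 <= sqrt (cc * cc - 1)) by apply sqrt_pos.
      apply Rmult_le_compat; lra.
      apply LipLoc_inv. exact Hs. }
  set (d := / (4 * (exp (2 * M) * cb) ^ 2 * (exp (2 * M) * cc) ^ 2)).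
  assert (Hd : 0 < d). { unfold d. apply Rinv_0_lt_compat.
    assert (0 < exp (2 * M)) by apply exp_pos.
    apply Rmult_lt_0_compat; [apply Rmult_lt_0_compat|]; try lra; apply pow_lt; nra. }
  assert (HQd : forall x, box n M x -> 1 + d <= Qx x).
  { intros x Hx. unfold Qx, Xa, Xb, Xc, d. apply (Q_delta n M); auto. }
  unfold Th. fold (Xa) (Xb) (Xc). change (LBe n M (fun x => arccosh (Qx x))).
  unfold arccosh.
  apply (LBe_comp n M (fun x => Qx x + sqrt (Qx x * Qx x - 1)) ln 1).
  - apply LBe_plus. exact LQ.
    apply (LBe_comp n M (fun x => Qx x * Qx x - 1) sqrt (2 * d)).
    apply LBe_plus. apply LBe_mult; auto. apply LBe_const.
    intros x Hx. specialize (HQd x Hx). nra.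
    apply LipLoc_sqrt. lra.
  - intros x Hx. specialize (HQd x Hx). assert (0 <= sqrt (Qx x * Qx x - 1)) by apply sqrt_pos. lra.
  - apply LipLoc_ln. lra.
Qed.

Lemma Th_growth n p q r ca cb cc : (p < n)%nat -> (q < n)%nat -> (r < n)%nat ->
  1 < ca -> 1 < cb -> 1 < cc -> exists a, 0 <= a /\
  forall M x, 0 <= M -> box n M x -> 0 <= Th p q r ca cb cc x <= a + 8 * M.
Proof.
  intros Hp Hq Hr Ha Hb Hc.
  set (sb := 2 * sqrt (cb * cb - 1)). set (sc := 2 * sqrt (cc * cc - 1)).
  assert (Hsb : 0 < sb) by (unfold sb; assert (0 < sqrt (cb * cb - 1)) by (apply sqrt_lt_R0; nra); lra).
  assert (Hsc : 0 < sc) by (unfold sc; assert (0 < sqrt (cc * cc - 1)) by (apply sqrt_lt_R0; nra); lra).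
  set (K1 := 8 * (ca * ca + (cb * cb) * (cc * cc)) / (sb * sc)).
  assert (HK1 : 0 < K1). { unfold K1. apply Rdiv_lt_0_compat. nra. nra. }
  exists (Rabs (ln K1)). split. apply Rabs_pos. intros M x HM Hx.
  destruct (Xe_bounds n M q r ca x) as [A1 A2]; auto.
  destruct (Xe_bounds n M r p cb x) as [B1 B2]; auto.
  destruct (Xe_bounds n M p q cc x) as [C1 C2]; auto.
  unfold Th. set (Xa := exp (x q + x r) * ca) in *. set (Xb := exp (x r + x p) * cb) in *.
  set (Xc := exp (x p + x q) * cc) in *. set (U := exp (2 * M)) in *.
  assert (HU : 1 <= U) by (apply exp_ge1; lra).
  assert (HQ1 := Q_ge1 Xa Xb Xc ltac:(lra) ltac:(lra) ltac:(lra)).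
  split. apply arccosh_nonneg. exact HQ1.
  eapply Rle_trans. apply arccosh_le_ln. exact HQ1.
  assert (HQu := Q_upper Xa Xb Xc sb sc ltac:(lra) ltac:(lra) ltac:(lra) Hsb (sl_lower Xb cb ltac:(lra) B1) Hsc (sl_lower Xc cc ltac:(lra) C1)).
  assert (HU4 : U * U * (U * U) = exp (8 * M)).
  { unfold U. rewrite <- !exp_plus. f_equal. ring. }
  assert (H2Q : 2 * Qf Xa Xb Xc <= exp (8 * M) * K1).
  { rewrite <- HU4. unfold K1. unfold Rdiv in *.
    assert (Hi : 0 < / (sb * sc)) by (apply Rinv_0_lt_compat; nra).
    assert (Hxa : Xa * Xa <= U * U * (U * U) * (ca * ca)).
    { assert (Xa * Xa <= (U * ca) * (U * ca)) by (apply Rmult_le_compat; lra).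
      assert (HUU : 1 <= U * U) by nra.
      assert (U * U <= U * U * (U * U)) by (rewrite <- (Rmult_1_r (U * U)) at 1; apply Rmult_le_compat_l; lra).
      assert ((U * ca) * (U * ca) = (U * U) * (ca * ca)) by ring.
      assert (U * U * (ca * ca) <= U * U * (U * U) * (ca * ca)) by (apply Rmult_le_compat_r; nra). nra. }
    assert (Hxbc : (Xb * Xb) * (Xc * Xc) <= U * U * (U * U) * ((cb * cb) * (cc * cc))).
    { assert (Xb * Xb <= (U * cb) * (U * cb)) by (apply Rmult_le_compat; lra).
      assert (Xc * Xc <= (U * cc) * (U * cc)) by (apply Rmult_le_compat; lra).
      assert (0 <= Xb * Xb) by nra. assert (0 <= Xc * Xc) by nra.
      assert ((Xb * Xb) * (Xc * Xc) <= ((U * cb) * (U * cb)) * ((U * cc) * (U * cc))) by (apply Rmult_le_compat; lra).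
      nra. }
    nra. }
  apply Rle_trans with (ln (exp (8 * M) * K1)).
  apply ln_le'. nra. exact H2Q.
  rewrite ln_mult, ln_exp by (try apply exp_pos; lra).
  assert (H := Rle_abs (ln K1)). lra.
Qed.

Lemma X_ratio (x : nat -> R) p q r ca cb cc : 0 < ca ->
  (exp (x r + x p) * cb) * (exp (x p + x q) * cc) =
  (exp (x q + x r) * ca) * (cb * cc / ca) * (exp (x p) * exp (x p)).
Proof. intros Ha. rewrite !exp_plus. field. lra. Qed.

Lemma Th_lower p q r ca cb cc x : 1 < ca -> 1 < cb -> 1 < cc ->
  0 <= x p -> 0 <= x q -> 0 <= x r ->
  arccosh (1 + ca * ca / (4 * (cb * cb) * (cc * cc)) / (exp (x p) ^ 4)) <= Th p q r ca cb cc x.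
Proof.
  intros Ha Hb Hc Hp Hq Hr. unfold Th.
  assert (E1 := exp_ge1 (x p) Hp).
  assert (Ra := X_ratio x p q r ca cb cc ltac:(lra)).
  set (E := exp (x p)) in *.
  set (Xa := exp (x q + x r) * ca) in *. set (Xb := exp (x r + x p) * cb) in *.
  set (Xc := exp (x p + x q) * cc) in *.
  assert (A1 : 1 <= exp (x q + x r)) by (apply exp_ge1; lra).
  assert (B1 : 1 <= exp (x r + x p)) by (apply exp_ge1; lra).
  assert (C1 : 1 <= exp (x p + x q)) by (apply exp_ge1; lra).
  assert (HXa : 1 < Xa) by (unfold Xa; nra). assert (HXb : 1 < Xb) by (unfold Xb; nra).
  assert (HXc : 1 < Xc) by (unfold Xc; nra).
  apply arccosh_mono.
  - assert (0 <= ca * ca / (4 * (cb * cb) * (cc * cc)) / E ^ 4).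
    { unfold Rdiv. apply Rmult_le_pos. apply Rmult_le_pos. nra. apply Rlt_le, Rinv_0_lt_compat.
      apply Rmult_lt_0_compat; [apply Rmult_lt_0_compat|]; nra.
      apply Rlt_le, Rinv_0_lt_compat, pow_lt. lra. }
    lra.
  - assert (H := Q_lower Xa Xb Xc ltac:(lra) HXb HXc).
    replace (ca * ca / (4 * (cb * cb) * (cc * cc)) / E ^ 4) with (Xa * Xa / (4 * (Xb * Xb) * (Xc * Xc))).
    lra.
    replace (4 * (Xb * Xb) * (Xc * Xc)) with (4 * ((Xb * Xc) * (Xb * Xc))) by ring.
    rewrite Ra. simpl. field. repeat split; lra.
Qed.

Lemma Th_upper p q r ca cb cc x : 1 < ca -> 1 < cb -> 1 < cc ->
  0 <= x p -> 0 <= x q -> 0 <= x r -> 2 <= exp (x p) ->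
  Th p q r ca cb cc x <=
  arccosh (1 + 2 * (ca * ca) / ((cb * cb) * (cc * cc)) / (exp (x p) ^ 4) + 3 / (exp (x p) ^ 2 - 1)).
Proof.
  intros Ha Hb Hc Hp Hq Hr HE. unfold Th.
  assert (Ra := X_ratio x p q r ca cb cc ltac:(lra)).
  assert (Eb : exp (x r + x p) = exp (x r) * exp (x p)) by apply exp_plus.
  assert (Ec : exp (x p + x q) = exp (x p) * exp (x q)) by apply exp_plus.
  assert (Er := exp_ge1 (x r) Hr). assert (Eq := exp_ge1 (x q) Hq).
  set (E := exp (x p)) in *.
  set (Xa := exp (x q + x r) * ca) in *. set (Xb := exp (x r + x p) * cb) in *.
  set (Xc := exp (x p + x q) * cc) in *.
  assert (A1 : 1 <= exp (x q + x r)) by (apply exp_ge1; lra).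
  assert (HXa : 1 < Xa) by (unfold Xa; nra).
  assert (HXb : E <= Xb).
  { unfold Xb; rewrite Eb. assert (E <= exp (x r) * E) by nra.
    assert (0 < exp (x r) * E) by nra. nra. }
  assert (HXc : E <= Xc).
  { unfold Xc; rewrite Ec. assert (E <= E * exp (x q)) by nra.
    assert (0 < E * exp (x q)) by nra. nra. }
  assert (HQ1 := Q_ge1 Xa Xb Xc ltac:(lra) ltac:(lra) ltac:(lra)).
  apply arccosh_mono. exact HQ1.
  assert (H := Q_upper_lim Xa Xb Xc (E * E) ltac:(lra) ltac:(lra) ltac:(lra) ltac:(nra) ltac:(nra) ltac:(nra)).
  replace (2 * (ca * ca) / (cb * cb * (cc * cc)) / E ^ 4) with (2 * (Xa * Xa) / (Xb * Xb * (Xc * Xc))).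
  replace (E ^ 2) with (E * E) by ring. lra.
  replace (Xb * Xb * (Xc * Xc)) with ((Xb * Xc) * (Xb * Xc)) by ring.
  rewrite Ra. simpl. field. repeat split; lra.
Qed.


Lemma nxt_facts k : (k < 3)%nat ->
  (nxt k < 3)%nat /\ (nxt2 k < 3)%nat /\ nxt (nxt k) = nxt2 k /\ nxt2 (nxt k) = k /\
  nxt (nxt2 k) = k /\ nxt2 (nxt2 k) = nxt k.
Proof.
  intros Hk. unfold nxt, nxt2.
  destruct k as [|[|[|k]]]; simpl; try lia; repeat split; auto.
Qed.

Lemma chl_su l0 ends x e a b : same_unordered (ends e) a b ->
  cosh_half_len l0 ends x e = exp (x a + x b) * cosh (l0 e / 2).
Proof.
  intros [[H1 H2]|[H1 H2]]; unfold cosh_half_len; rewrite H1, H2. reflexivity.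
  rewrite Rplus_comm. reflexivity.
Qed.

Lemma cosh_gt1 z : 0 < z -> 1 < cosh z.
Proof.
  intros Hz. unfold cosh. rewrite exp_Ropp.
  assert (H := exp_increasing 0 z Hz). rewrite exp_0 in H.
  set (E := exp z) in *. assert (0 < / E) by (apply Rinv_0_lt_compat; lra).
  assert (E * / E = 1) by (field; lra).
  assert (0 < (E - 1) * (E - 1)) by nra. nra.
Qed.

Definition ce (l0 : nat -> R) e := cosh (l0 e / 2).

Lemma tri_data n nE nF corner side ends f k :
  ideal_triangulation n nE nF corner side ends -> (f < nF)%nat -> (k < 3)%nat ->
  (corner f k < n)%nat /\ (corner f (nxt k) < n)%nat /\ (corner f (nxt2 k) < n)%nat /\
  (side f k < nE)%nat /\ (side f (nxt k) < nE)%nat /\ (side f (nxt2 k) < nE)%nat /\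
  same_unordered (ends (side f k)) (corner f (nxt k)) (corner f (nxt2 k)) /\
  same_unordered (ends (side f (nxt k))) (corner f (nxt2 k)) (corner f k) /\
  same_unordered (ends (side f (nxt2 k))) (corner f k) (corner f (nxt k)).
Proof.
  intros (T1 & T2 & T3 & T4) Hf Hk.
  destruct (nxt_facts k Hk) as (N1 & N2 & N3 & N4 & N5 & N6).
  destruct (T1 f k Hf Hk). destruct (T1 f (nxt k) Hf N1). destruct (T1 f (nxt2 k) Hf N2).
  assert (S1 := T3 f k Hf Hk).
  assert (S2 := T3 f (nxt k) Hf N1). rewrite N3, N4 in S2.
  assert (S3 := T3 f (nxt2 k) Hf N2). rewrite N5, N6 in S3.
  tauto.
Qed.

Lemma theta_Th n nE nF corner side ends l0 f k x :
  ideal_triangulation n nE nF corner side ends -> (f < nF)%nat -> (k < 3)%nat ->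
  0 <= x (corner f k) -> 0 <= x (corner f (nxt k)) -> 0 <= x (corner f (nxt2 k)) ->
  theta l0 ends side x f k =
  Th (corner f k) (corner f (nxt k)) (corner f (nxt2 k))
     (ce l0 (side f k)) (ce l0 (side f (nxt k))) (ce l0 (side f (nxt2 k))) x.
Proof.
  intros Ht Hf Hk Hp Hq Hr.
  destruct (tri_data n nE nF corner side ends f k Ht Hf Hk) as (_&_&_&_&_&_&S1&S2&S3).
  assert (Hc : forall e, 1 <= cosh (l0 e / 2)).
  { intros e. unfold cosh. rewrite exp_Ropp. assert (0 < exp (l0 e / 2)) by apply exp_pos.
    set (E := exp (l0 e / 2)) in *. assert (E * / E = 1) by (field; lra).
    assert (0 < / E) by (apply Rinv_0_lt_compat; lra).
    assert (E + / E - 2 = (E - 1) * (E - 1) * / E) by (field; lra).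
    assert (0 <= (E - 1) * (E - 1) * / E) by (apply Rmult_le_pos; [apply Rle_0_sqr | lra]). lra. }
  unfold theta, len. rewrite (chl_su l0 ends x _ _ _ S1), (chl_su l0 ends x _ _ _ S2), (chl_su l0 ends x _ _ _ S3).
  set (p := corner f k) in *. set (q := corner f (nxt k)) in *. set (r := corner f (nxt2 k)) in *.
  assert (A1 : 1 <= exp (x q + x r) * cosh (l0 (side f k) / 2)).
  { assert (1 <= exp (x q + x r)) by (apply exp_ge1; lra). specialize (Hc (side f k)). nra. }
  assert (B1 : 1 <= exp (x r + x p) * cosh (l0 (side f (nxt k)) / 2)).
  { assert (1 <= exp (x r + x p)) by (apply exp_ge1; lra). specialize (Hc (side f (nxt k))). nra. }
  assert (C1 : 1 <= exp (x p + x q) * cosh (l0 (side f (nxt2 k)) / 2)).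
  { assert (1 <= exp (x p + x q)) by (apply exp_ge1; lra). specialize (Hc (side f (nxt2 k))). nra. }
  rewrite !cosh_2ach, !sinh_2ach by auto.
  unfold Th, Qf, cl, sl, ce. reflexivity.
Qed.

Lemma in_corners nF f k : In (f, k) (corners_list nF) -> (f < nF)%nat /\ (k < 3)%nat.
Proof.
  unfold corners_list. intros H. apply in_prod_iff in H. destruct H as [H1 H2].
  apply in_seq in H1. apply in_seq in H2. lia.
Qed.

Lemma corners_in nF f k : (f < nF)%nat -> (k < 3)%nat -> In (f, k) (corners_list nF).
Proof.
  intros Hf Hk. unfold corners_list. apply in_prod_iff. split; apply in_seq; lia.
Qed.

Lemma ends_lt n nE nF corner side ends e :
  ideal_triangulation n nE nF corner side ends -> (e < nE)%nat ->
  (fst (ends e) < n)%nat /\ (snd (ends e) < n)%nat.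
Proof.
  intros Ht He. pose proof Ht as (T1 & T2 & T3 & T4).
  specialize (T2 e He).
  destruct (filter (fun p => Nat.eqb (side (fst p) (snd p)) e) (corners_list nF)) as [|[f k] l] eqn:Hfl.
  simpl in T2. lia.
  assert (Hin : In (f, k) (filter (fun p => Nat.eqb (side (fst p) (snd p)) e) (corners_list nF))).
  { rewrite Hfl. left. reflexivity. }
  apply filter_In in Hin. destruct Hin as [Hin Heq]. simpl in Heq. apply Nat.eqb_eq in Heq.
  destruct (in_corners nF f k Hin) as [Hf Hk].
  destruct (tri_data n nE nF corner side ends f k Ht Hf Hk) as (P1&P2&P3&_&_&_&S1&_&_).
  rewrite Heq in S1. destruct S1 as [[-> ->]|[-> ->]]; auto.
Qed.


Definition Bsum (c : nat * nat -> nat) (T : nat * nat -> (nat -> R) -> R)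
  (l : list (nat * nat)) (x : nat -> R) (i : nat) : R :=
  fold_right Rplus 0 (map (fun p => if Nat.eqb (c p) i then T p x else 0) l).

Lemma Bsum_lip n M c T l :
  (forall p, In p l -> exists L, 0 <= L /\ forall x y d, box n M x -> box n M y -> 0 <= d ->
      close n d x y -> Rabs (T p x - T p y) <= L * d) ->
  exists Lt, 0 <= Lt /\ forall x y d i, box n M x -> box n M y -> 0 <= d -> close n d x y ->
      Rabs (Bsum c T l x i - Bsum c T l y i) <= Lt * d.
Proof.
  induction l as [|p l IH]; intros H.
  - exists 0. split. lra. intros. unfold Bsum. simpl. rewrite Rminus_diag, Rabs_R0. lra.
  - destruct IH as [L1 [HL1 H1]]. intros p' Hp'. apply H. right. exact Hp'.
    destruct (H p (or_introl eq_refl)) as [L2 [HL2 H2]].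
    exists (L2 + L1). split. lra. intros x y d i Hx Hy Hd Hc. unfold Bsum. simpl.
    fold (Bsum c T l x i) (Bsum c T l y i).
    specialize (H1 x y d i Hx Hy Hd Hc).
    replace ((if c p =? i then T p x else 0) + Bsum c T l x i -
      ((if c p =? i then T p y else 0) + Bsum c T l y i)) with
      (((if c p =? i then T p x else 0) - (if c p =? i then T p y else 0)) + (Bsum c T l x i - Bsum c T l y i)) by ring.
    eapply Rle_trans. apply Rabs_triang.
    assert (Rabs ((if c p =? i then T p x else 0) - (if c p =? i then T p y else 0)) <= L2 * d).
    { destruct (c p =? i). apply H2; auto. rewrite Rminus_diag, Rabs_R0. nra. }
    lra.
Qed.

Lemma Bsum_growth n c T l :
  (forall p, In p l -> exists a, 0 <= a /\ forall M x, 0 <= M -> box n M x -> 0 <= T p x <= a + 8 * M) ->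
  exists A, 0 <= A /\ forall M x i, 0 <= M -> box n M x ->
    0 <= Bsum c T l x i <= A + 8 * INR (length l) * M.
Proof.
  induction l as [|p l IH]; intros H.
  - exists 0. split. lra. intros. unfold Bsum. simpl. lra.
  - destruct IH as [A1 [HA1 H1]]. intros p' Hp'. apply H. right. exact Hp'.
    destruct (H p (or_introl eq_refl)) as [a [Ha H2]].
    exists (a + A1). split. lra. intros M x i HM Hx. unfold Bsum. simpl map. simpl fold_right.
    fold (Bsum c T l x i). specialize (H1 M x i HM Hx). specialize (H2 M x HM Hx).
    replace (length (p :: l)) with (S (length l)) by reflexivity. rewrite S_INR.
    destruct (c p =? i); nra.
Qed.

Lemma Bsum_nonneg c T l x i : (forall p, In p l -> 0 <= T p x) -> 0 <= Bsum c T l x i.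
Proof.
  induction l as [|p l IH]; intros H; unfold Bsum; simpl. lra.
  fold (Bsum c T l x i). assert (0 <= Bsum c T l x i) by (apply IH; intros; apply H; right; auto).
  destruct (c p =? i). assert (0 <= T p x) by (apply H; left; auto). lra. lra.
Qed.

Lemma Bsum_lower c T l x i p0 : (forall p, In p l -> 0 <= T p x) -> In p0 l -> c p0 = i ->
  T p0 x <= Bsum c T l x i.
Proof.
  induction l as [|p l IH]; intros H Hin Hc. destruct Hin.
  unfold Bsum; simpl. fold (Bsum c T l x i).
  destruct Hin as [<-|Hin].
  - rewrite (proj2 (Nat.eqb_eq _ _) Hc).
    assert (0 <= Bsum c T l x i) by (apply Bsum_nonneg; intros; apply H; right; auto). lra.
  - assert (T p0 x <= Bsum c T l x i) by (apply IH; auto; intros; apply H; right; auto).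
    destruct (c p =? i). assert (0 <= T p x) by (apply H; left; auto). lra. lra.
Qed.

Lemma Bsum_lim c T l (w : R -> nat -> R) i :
  (forall p, In p l -> is_lim (fun t => T p (w t)) p_infty 0) ->
  is_lim (fun t => Bsum c T l (w t) i) p_infty 0.
Proof.
  induction l as [|p l IH]; intros H; unfold Bsum; simpl.
  - apply is_lim_const.
  - replace (Finite 0) with (Finite (0 + 0)) by (f_equal; ring).
    apply is_lim_plus'.
    + destruct (c p =? i). apply H. left. auto. apply is_lim_const.
    + apply IH. intros. apply H. right. auto.
Qed.


Definition ThP (corner side : nat -> nat -> nat) (l0 : nat -> R) (p : nat * nat) : (nat -> R) -> R :=
  Th (corner (fst p) (snd p)) (corner (fst p) (nxt (snd p))) (corner (fst p) (nxt2 (snd p)))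
     (ce l0 (side (fst p) (snd p))) (ce l0 (side (fst p) (nxt (snd p)))) (ce l0 (side (fst p) (nxt2 (snd p)))).

Lemma term_facts n nE nF corner side ends l0 p :
  ideal_triangulation n nE nF corner side ends -> (forall e, (e < nE)%nat -> 0 < l0 e) ->
  In p (corners_list nF) ->
  (corner (fst p) (snd p) < n)%nat /\ (corner (fst p) (nxt (snd p)) < n)%nat /\
  (corner (fst p) (nxt2 (snd p)) < n)%nat /\
  1 < ce l0 (side (fst p) (snd p)) /\ 1 < ce l0 (side (fst p) (nxt (snd p))) /\
  1 < ce l0 (side (fst p) (nxt2 (snd p))) /\
  (forall x, (forall j, (j < n)%nat -> 0 <= x j) ->
     theta l0 ends side x (fst p) (snd p) = ThP corner side l0 p x).
Proof.
  intros Ht Hl Hin. destruct p as [f k]. simpl.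
  destruct (in_corners nF f k Hin) as [Hf Hk].
  destruct (tri_data n nE nF corner side ends f k Ht Hf Hk) as (P1&P2&P3&E1&E2&E3&_).
  unfold ce. repeat split; auto.
  - apply cosh_gt1. assert (H := Hl _ E1). lra.
  - apply cosh_gt1. assert (H := Hl _ E2). lra.
  - apply cosh_gt1. assert (H := Hl _ E3). lra.
  - intros x Hx. unfold ThP. simpl. apply (theta_Th n nE nF corner side ends l0 f k x Ht Hf Hk); apply Hx; auto.
Qed.

Theorem theorem3 (n nE nF : nat) (corner side : nat -> nat -> nat)
    (ends : nat -> nat * nat) (l0 : nat -> R) :
  ideal_triangulation n nE nF corner side ends ->
  (forall e, (e < nE)%nat -> 0 < l0 e) ->
  exists w : R -> nat -> R,
    (forall i, (i < n)%nat -> w 0 i = 0) /\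
    (forall t, 0 <= t -> metric_ok nE l0 ends (w t)) /\
    (forall i, (i < n)%nat ->
       filterlim (fun s => w s i) (at_right 0) (locally (w 0 i))) /\
    (forall i t, (i < n)%nat -> 0 < t ->
       is_derive (fun s => w s i) t (Blen nF l0 ends corner side (w t) i)) /\
    (forall i, (i < n)%nat ->
       is_lim (fun t => Blen nF l0 ends corner side (w t) i) p_infty 0) /\
    (forall f k, (f < nF)%nat -> (k < 3)%nat ->
       is_lim (fun t => theta l0 ends side (w t) f k) p_infty 0).
Proof.
  intros Ht Hl0.
  set (cc := fun p : nat * nat => corner (fst p) (snd p)).
  set (T := fun (p : nat * nat) (x : nat -> R) => theta l0 ends side x (fst p) (snd p)).
  set (LL := corners_list nF).
  set (G := fun x i => Blen nF l0 ends corner side x i).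
  assert (HGB : forall x i, G x i = Bsum cc T LL x i) by reflexivity.
  assert (Hbnn : forall M x, box n M x -> forall j, (j < n)%nat -> 0 <= x j).
  { intros M x Hx j Hj. apply (Hx j Hj). }
  destruct (Bsum_growth n cc T LL) as [A [HA HAg]].
  { intros p Hp. destruct (term_facts n nE nF corner side ends l0 p Ht Hl0 Hp) as (P1&P2&P3&C1&C2&C3&Heq).
    destruct (Th_growth n _ _ _ _ _ _ P1 P2 P3 C1 C2 C3) as [a [Ha Hg]].
    exists a. split. exact Ha. intros M x HM Hx. unfold T. rewrite Heq by (apply Hbnn with M; auto).
    apply Hg; auto. }
  set (C := 8 * INR (length LL) + 1).
  assert (HC : 0 < C). { unfold C. assert (H := pos_INR (length LL)). lra. }
  assert (H0 : ODEH n G A C).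
  { split. exact HA. split. exact HC. split.
    - intros M HM.
      destruct (Bsum_lip n M cc T LL) as [Lt [HLt HLl]].
      { intros p Hp. destruct (term_facts n nE nF corner side ends l0 p Ht Hl0 Hp) as (P1&P2&P3&C1&C2&C3&Heq).
        destruct (Th_LBe n M _ _ _ _ _ _ P1 P2 P3 C1 C2 C3 HM) as [L [B (L1 & L2 & L3 & L4)]].
        exists L. split. exact L1. intros x y d Hx Hy Hd Hc. unfold T.
        rewrite !Heq by (apply Hbnn with M; auto). apply L4; auto. }
      exists Lt. split. exact HLt. intros x y d i Hx Hy Hd Hc Hi. rewrite !HGB. apply HLl; auto.
    - intros M x i HM Hx Hi. rewrite HGB. destruct (HAg M x i HM Hx) as [G1 G2]. split. exact G1.
      unfold C. assert (H := pos_INR (length LL)). nra. }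
  destruct (ode_exists n G A C H0) as (W0 & Wbox & Wmono & Wright & Wder).
  set (w := wsol n G).
  assert (Wnn : forall t j, 0 <= t -> (j < n)%nat -> 0 <= w t j).
  { intros t j Ht0 Hj. apply (Wbox t Ht0 j Hj). }
  assert (Tnn : forall t p, 0 <= t -> In p LL -> 0 <= T p (w t)).
  { intros t p Ht0 Hp. destruct (term_facts n nE nF corner side ends l0 p Ht Hl0 Hp) as (P1&P2&P3&C1&C2&C3&Heq).
    destruct (Th_growth n _ _ _ _ _ _ P1 P2 P3 C1 C2 C3) as [a [Ha Hg]].
    unfold T. rewrite Heq by (intros; apply Wnn; auto).
    apply (Hg (Pb A C t)). apply Pb_nonneg; lra. apply Wbox. exact Ht0. }
  assert (Div : forall i, (i < n)%nat -> forall W, exists T0, forall t, T0 < t -> W < w t i).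
  { intros i Hi W.
    destruct (classic (exists t0, 0 <= t0 /\ W < w t0 i)) as [[t0 [Ht0 HW]]|Hno].
    - exists t0. intros t Htt. eapply Rlt_le_trans. exact HW. apply Wmono; auto. lra.
    - exfalso.
      assert (Hle : forall t, 0 <= t -> w t i <= W).
      { intros t Ht0. apply Rnot_lt_le. intros Hc. apply Hno. exists t. auto. }
      destruct Ht as (T1 & T2 & T3 & T4).
      destruct (T4 i Hi) as [f [k [Hf [Hk Hfk]]]].
      assert (Hin : In (f, k) LL) by (apply corners_in; auto).
      destruct (term_facts n nE nF corner side ends l0 (f, k) (conj T1 (conj T2 (conj T3 T4))) Hl0 Hin)
        as (P1&P2&P3&C1&C2&C3&Heq).
      simpl in P1, P2, P3, C1, C2, C3, Heq.
      set (ca := ce l0 (side f k)) in *. set (cb := ce l0 (side f (nxt k))) in *.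
      set (cc' := ce l0 (side f (nxt2 k))) in *.
      set (c0 := ca * ca / (4 * (cb * cb) * (cc' * cc'))).
      assert (Hc0 : 0 < c0). { unfold c0. apply Rdiv_lt_0_compat. nra.
        apply Rmult_lt_0_compat; [apply Rmult_lt_0_compat|]; nra. }
      assert (HEW : 0 < exp W ^ 4) by (apply pow_lt, exp_pos).
      set (beta := arccosh (1 + c0 / exp W ^ 4)).
      assert (Hbeta : 0 < beta).
      { apply arccosh_pos. assert (0 < c0 / exp W ^ 4) by (apply Rdiv_lt_0_compat; auto). lra. }
      assert (HB : forall t, 0 < t -> beta <= G (w t) i).
      { intros t Htp. rewrite HGB.
        apply Rle_trans with (T (f, k) (w t)).
        2: { apply Bsum_lower. intros p Hp. apply Tnn; auto; lra. exact Hin. unfold cc. simpl. exact Hfk. }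
        unfold T. simpl. rewrite Heq by (intros; apply Wnn; auto; lra).
        eapply Rle_trans. 2: apply Th_lower; auto; apply Wnn; auto; lra.
        unfold beta. apply arccosh_mono.
        assert (0 < c0 / exp W ^ 4) by (apply Rdiv_lt_0_compat; auto). lra.
        apply Rplus_le_compat_l. cbn [fst snd]. rewrite Hfk. unfold c0, ca, cb, cc'. unfold Rdiv.
        apply Rmult_le_compat_l. unfold c0, ca, cb, cc' in Hc0. unfold Rdiv in Hc0. lra. apply Rinv_le_contravar. apply pow_lt, exp_pos.
        apply pow_incr. split. apply Rlt_le, exp_pos. apply exp_le. apply Hle. lra. }
      set (t1 := 1 + (W - w 1 i + 1) / beta).
      assert (Hw1 : w 1 i <= W) by (apply Hle; lra).
      assert (Ht1 : 1 < t1). { unfold t1. assert (0 < (W - w 1 i + 1) / beta) by (apply Rdiv_lt_0_compat; lra). lra. }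
      destruct (MVT_gen (fun s => w s i) 1 t1 (fun s => G (w s) i)) as [c [Hc Heqc]].
      + intros x Hx. rewrite Rmin_left in Hx by lra. apply Wder; auto. lra.
      + intros x Hx. rewrite Rmin_left in Hx by lra. apply continuity_pt_filterlim.
        apply (cont_of_derive _ _ _ (Wder x i ltac:(lra) Hi)).
      + rewrite Rmin_left, Rmax_right in Hc by lra. simpl in Heqc.
        assert (Hbc := HB c ltac:(lra)).
        assert (Hwt1 := Hle t1 ltac:(lra)).
        assert (G (w c) i * (t1 - 1) >= beta * (t1 - 1)) by (apply Rle_ge, Rmult_le_compat_r; lra).
        assert (beta * (t1 - 1) = W - w 1 i + 1) by (unfold t1; field; lra).
        lra. }
  assert (Thlim : forall f k, (f < nF)%nat -> (k < 3)%nat ->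
            is_lim (fun t => theta l0 ends side (w t) f k) p_infty 0).
  { intros f k Hf Hk.
    assert (Hin : In (f, k) LL) by (apply corners_in; auto).
    destruct (term_facts n nE nF corner side ends l0 (f, k) Ht Hl0 Hin) as (P1&P2&P3&C1&C2&C3&Heq).
    simpl in P1, P2, P3, C1, C2, C3, Heq.
    set (ca := ce l0 (side f k)) in *. set (cb := ce l0 (side f (nxt k))) in *.
    set (cc' := ce l0 (side f (nxt2 k))) in *.
    set (K := 2 * (ca * ca) / ((cb * cb) * (cc' * cc'))).
    assert (HK : 0 < K). { unfold K. apply Rdiv_lt_0_compat. nra. apply Rmult_lt_0_compat; nra. }
    unfold is_lim. apply filterlim_locally. intros [eps Heps]. simpl.
    destruct (arccosh_near1 eps Heps) as [dl [Hdl Hac]].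
    set (E0 := 2 + (K + 3) / dl).
    assert (HE0 : 2 < E0). { unfold E0. assert (0 < (K + 3) / dl) by (apply Rdiv_lt_0_compat; lra). lra. }
    destruct (Div _ P1 (ln E0)) as [T0 HT0].
    exists (Rmax T0 0). intros t Htt.
    assert (Ht0 : 0 < t) by (assert (H := Rmax_r T0 0); lra).
    assert (HtT : T0 < t) by (assert (H := Rmax_l T0 0); lra).
    specialize (HT0 t HtT).
    apply ballR. rewrite Rminus_0_r.
    rewrite Heq by (intros; apply Wnn; auto; lra). unfold ThP. cbn [fst snd].
    set (E := exp (w t (corner f k))).
    assert (HE : E0 < E). { unfold E. rewrite <- (exp_ln E0) by lra. apply exp_increasing. exact HT0. }
    assert (Hnn := Th_growth n _ _ _ _ _ _ P1 P2 P3 C1 C2 C3). destruct Hnn as [a [_ Hg]].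
    destruct (Hg (Pb A C t) (w t)) as [Hg1 _]. apply Pb_nonneg; lra. apply Wbox; lra.
    fold ca cb cc'. rewrite Rabs_right by lra.
    eapply Rle_lt_trans. apply Th_upper; auto; try (apply Wnn; auto; lra). fold E. lra.
    fold E. fold K. apply Hac.
    assert (HE4 : E <= E ^ 4). { simpl. assert (1 <= E * E) by nra. assert (1 <= E * (E * E)) by nra. nra. }
    assert (HE2 : E <= E ^ 2 - 1). { simpl. nra. }
    assert (Hk1 : K / E ^ 4 <= K / E). { apply Rmult_le_compat_l. lra. apply Rinv_le_contravar; lra. }
    assert (Hk2 : 3 / (E ^ 2 - 1) <= 3 / E). { apply Rmult_le_compat_l. lra. apply Rinv_le_contravar; lra. }
    assert (Hk3 : (K + 3) / E < dl).
    { apply Rmult_lt_reg_r with E. lra. unfold Rdiv. rewrite Rmult_assoc, Rinv_l, Rmult_1_r by lra.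
      unfold E0 in HE. apply Rmult_lt_reg_l with (/ dl). apply Rinv_0_lt_compat; lra.
      replace (/ dl * (dl * E)) with E by (field; lra).
      replace (/ dl * (K + 3)) with ((K + 3) / dl) by (unfold Rdiv; ring). lra. }
    assert (0 <= K / E ^ 4) by (apply Rmult_le_pos; [lra | apply Rlt_le, Rinv_0_lt_compat, pow_lt; lra]).
    assert (0 <= 3 / (E ^ 2 - 1)) by (apply Rmult_le_pos; [lra | apply Rlt_le, Rinv_0_lt_compat; lra]).
    assert (K / E + 3 / E = (K + 3) / E) by (field; lra).
    split; lra. }
  exists w. split. intros i Hi. apply W0.
  split.
  { intros t Ht0 e He. unfold cosh_half_len.
    destruct (ends_lt n nE nF corner side ends e Ht He) as [E1 E2].
    assert (1 <= exp (w t (fst (ends e)) + w t (snd (ends e)))).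
    { apply exp_ge1. assert (H1 := Wnn t _ Ht0 E1). assert (H2 := Wnn t _ Ht0 E2). lra. }
    assert (1 < cosh (l0 e / 2)) by (apply cosh_gt1; assert (Hq := Hl0 e He); lra).
    nra. }
  split. { intros i Hi. rewrite W0. apply Wright. exact Hi. }
  split. { intros i t Hi Htp. apply Wder; auto. }
  split.
  { intros i Hi. apply (is_lim_ext (fun t => Bsum cc T LL (w t) i)). intros t. rewrite <- HGB. reflexivity.
    apply Bsum_lim. intros p Hp. destruct p as [f k]. destruct (in_corners nF f k Hp) as [Hf Hk].
    unfold T. simpl. apply Thlim; auto. }
  exact Thlim.
Qed.
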